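(* For every integer $m\ge2$, \[ \int\cdots\int_{V_m}\frac{dx_1\cdots dx_m}{x_1\cdots x_m}=(m-1)!\,\zeta(m). \]
   Context: $V_m:=\{(x_1,\dots,x_m)\in[0,1]^m : x_1+x_j\ge1 \text{ for } j=2,\dots,m\}$; $\zeta$ is the Riemann zeta function. *)

(* Defs.v *)
From Stdlib Require Import Reals Lra Lia List.
Open Scope R_scope.

(* Points of R^m are functions x : nat -> R; coordinate x_{i+1} of the paper
   is (x i), for i < m. *)

Fixpoint prodR (m : nat) (x : nat -> R) : R :=
  match m with
  | O => 1
  | S k => prodR k x * x k
  end.

Definition In_V (m : nat) (x : nat -> R) : Prop :=
  (forall i, (i < m)%nat -> 0 <= x i <= 1) /\
  (forall j, (1 <= j < m)%nat -> x 0%nat + x j >= 1).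

Record box := Box { lo : nat -> R; hi : nat -> R }.

Definition in_boxb (m : nat) (B : box) (x : nat -> R) : bool :=
  forallb (fun i => if Rle_dec (lo B i) (x i) then
                      if Rle_dec (x i) (hi B i) then true else false
                    else false) (seq 0 m).

Definition box_vol (m : nat) (B : box) : R := prodR m (fun i => hi B i - lo B i).

(* A nonnegative step function: finite list of (coefficient, box),
   s(x) = sum_k c_k 1_{B_k}(x). *)
Definition step_fun := list (R * box).

Definition step_valid (m : nat) (s : step_fun) : Prop :=
  forall c B, In (c, B) s -> 0 <= c /\ forall i, (i < m)%nat -> lo B i <= hi B i.

Definition step_val (m : nat) (s : step_fun) (x : nat -> R) : R :=
  fold_right (fun p acc => (if in_boxb m (snd p) x then fst p else 0) + acc) 0 s.

Definition step_int (m : nat) (s : step_fun) : R :=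
  fold_right (fun p acc => fst p * box_vol m (snd p) + acc) 0 s.

(* s lies below the integrand f = 1_{V_m}(x) / (x_1 ... x_m) on all of R^m,
   where f is taken to be +infinity at points of V_m with some x_i = 0. *)
Definition below_integrand (m : nat) (s : step_fun) : Prop :=
  forall x : nat -> R,
    (In_V m x -> prodR m x > 0 -> step_val m s x * prodR m x <= 1) /\
    (~ In_V m x -> step_val m s x <= 0).

(* The set of integrals of nonnegative step functions below the integrand;
   its supremum is the (lower Darboux / Lebesgue) integral of the
   nonnegative integrand over V_m. *)
Definition lower_sums (m : nat) (v : R) : Prop :=
  exists s : step_fun, step_valid m s /\ below_integrand m s /\ v = step_int m s.

Definition zeta_term (m : nat) (n : nat) : R := / (INR (S n)) ^ m.

(* Main.v *)
Require Import Defs.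
From Stdlib Require Import Reals Arith.
From Stdlib Require Import Lra Lia Psatz List Classical_Prop.
Open Scope R_scope.

Fixpoint sumN (n : nat) (f : nat -> R) : R :=
  match n with O => 0 | S n' => sumN n' f + f n' end.

Lemma sumN_ext : forall n f g, (forall i, (i < n)%nat -> f i = g i) -> sumN n f = sumN n g.
Proof. induction n; intros f g H; simpl; auto. rewrite (IHn f g); [rewrite H|]; auto. Qed.

Lemma sumN_le : forall n f g, (forall i, (i < n)%nat -> f i <= g i) -> sumN n f <= sumN n g.
Proof. induction n; intros f g H; simpl; [lra|]. assert (H1 := IHn f g (fun i Hi => H i (Nat.lt_lt_succ_r _ _ Hi))). assert (H2 := H n (Nat.lt_succ_diag_r n)). lra. Qed.

Lemma sumN_nonneg : forall n f, (forall i, (i < n)%nat -> 0 <= f i) -> 0 <= sumN n f.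
Proof. intros. replace 0 with (sumN n (fun _ => 0)). apply sumN_le; auto. induction n; simpl; auto. rewrite IHn; [lra|]. intros; apply H; lia. Qed.

Lemma sumN_plus : forall n f g, sumN n (fun i => f i + g i) = sumN n f + sumN n g.
Proof. induction n; intros; simpl; [lra|]. rewrite IHn; lra. Qed.

Lemma sumN_minus : forall n f g, sumN n (fun i => f i - g i) = sumN n f - sumN n g.
Proof. induction n; intros; simpl; [lra|]. rewrite IHn; lra. Qed.

Lemma sumN_scal : forall n c f, sumN n (fun i => c * f i) = c * sumN n f.
Proof. induction n; intros; simpl; [lra|]. rewrite IHn; lra. Qed.

Lemma sumN_scalr : forall n c f, sumN n (fun i => f i * c) = sumN n f * c.
Proof. induction n; intros; simpl; [lra|]. rewrite IHn; lra. Qed.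

Lemma sumN_shift : forall n f, sumN (S n) f = f O + sumN n (fun i => f (S i)).
Proof. induction n; intros; simpl in *; [lra|]. rewrite IHn. lra. Qed.

Lemma sumN_split : forall a b f, sumN (a + b) f = sumN a f + sumN b (fun i => f (a + i)%nat).
Proof. intros a b; induction b; intros; simpl. rewrite Nat.add_0_r; lra.
 rewrite Nat.add_succ_r; simpl. rewrite IHb. lra. Qed.

Lemma sumN_exch : forall n p (f : nat -> nat -> R),
  sumN n (fun i => sumN p (fun j => f i j)) = sumN p (fun j => sumN n (fun i => f i j)).
Proof. induction n; intros; simpl. induction p; simpl; lra.
 rewrite IHn. rewrite <- sumN_plus. reflexivity. Qed.

Lemma sumN_const : forall n c, sumN n (fun _ => c) = INR n * c.
Proof. induction n; intros; simpl sumN; [simpl; lra|]. rewrite IHn, S_INR; lra. Qed.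

Lemma sumN_single : forall n f i0, (forall i, (i < n)%nat -> i <> i0 -> f i = 0) ->
  sumN n f = if lt_dec i0 n then f i0 else 0.
Proof. induction n; intros f i0 H; simpl. destruct (lt_dec i0 0); [lia|auto].
 rewrite (IHn f i0). destruct (lt_dec i0 n); destruct (lt_dec i0 (S n)); try lia.
 - rewrite (H n); [lra|lia|lia].
 - assert (i0 = n) by lia; subst; lra.
 - rewrite (H n); [lra|lia|lia].
 - intros; apply H; lia. Qed.

Definition H (n : nat) : R := sumN n (fun i => / INR (S i)).
Definition Hp (p n : nat) : R := sumN n (fun i => / (INR (S i)) ^ p).

Lemma INRS_pos : forall i, 0 < INR (S i).
Proof. intros; apply lt_0_INR; lia. Qed.

Lemma H_S : forall n, H (S n) = H n + / INR (S n).
Proof. reflexivity. Qed.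

Lemma H_nonneg : forall n, 0 <= H n.
Proof. intros; apply sumN_nonneg; intros; left; apply Rinv_0_lt_compat, INRS_pos. Qed.

Lemma H_mono : forall a b, (a <= b)%nat -> H a <= H b.
Proof. intros a b Hab; induction Hab; [lra|]. rewrite H_S. assert (0 < / INR (S m)) by (apply Rinv_0_lt_compat, INRS_pos). lra. Qed.

Fixpoint ff (x : R) (j : nat) : R := match j with O => 1 | S j' => x * ff (x - 1) j' end.

Lemma ff_diff : forall j x, ff (x + 1) (S j) - ff x (S j) = INR (S j) * ff x j.
Proof. induction j; intros x. simpl. lra.
 change (ff (x + 1) (S (S j))) with ((x+1) * ff (x + 1 - 1) (S j)).
 change (ff x (S (S j))) with (x * ff (x - 1) (S j)).
 replace (x + 1 - 1) with x by ring.
 assert (IH := IHj (x - 1)). replace (x - 1 + 1) with x in IH by ring.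
 change (ff x (S j)) with (x * ff (x - 1) j) in *.
 rewrite (S_INR (S j)). rewrite S_INR in IH.
 assert (HG : ff (x - 1) (S j) = x * ff (x - 1) j - (INR j + 1) * ff (x - 1) j) by lra.
 rewrite HG, S_INR. ring. Qed.

Lemma ff_hockey : forall j r, sumN r (fun i => ff (INR i) j) = ff (INR r) (S j) / INR (S j).
Proof. intros j r; induction r. simpl. unfold Rdiv; ring.
 simpl sumN. rewrite IHr. rewrite (S_INR r). assert (Hd := ff_diff j (INR r)).
 assert (0 < INR (S j)) by apply INRS_pos.
 replace (ff (INR r + 1) (S j)) with (ff (INR r) (S j) + INR (S j) * ff (INR r) j) by lra.
 field. lra. Qed.

Lemma ff_S_INR : forall r j, ff (INR (S r)) (S j) = INR (S r) * ff (INR r) j.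
Proof. intros. change (ff (INR (S r)) (S j)) with (INR (S r) * ff (INR (S r) - 1) j). rewrite S_INR. replace (INR r + 1 - 1) with (INR r) by ring. reflexivity. Qed.

Lemma ff_nz : forall M j, (j <= M)%nat -> ff (INR M) j <> 0.
Proof. induction M; intros j Hj. assert (j = O) by lia; subst; simpl; lra.
 destruct j. simpl; lra. rewrite ff_S_INR. apply Rmult_integral_contrapositive; split.
 apply not_0_INR; lia. apply IHM; lia. Qed.

Lemma ff_zero0 : forall j, ff 0 (S j) = 0.
Proof. intros; simpl; ring. Qed.

Lemma newton : forall r M, (r <= M)%nat ->
  sumN (S M) (fun j => ff (INR r) j / ff (INR M) j) = INR (S M) / (INR (S M) - INR r).
Proof. induction r; intros M HrM.
 - rewrite sumN_shift. rewrite (sumN_ext _ _ (fun _ => 0)).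
   2:{ intros; simpl INR at 1; rewrite ff_zero0; unfold Rdiv; ring. }
   rewrite sumN_const. simpl ff. simpl INR at 4. assert (0 < INR (S M)) by apply INRS_pos. field. lra.
 - destruct M as [|M]; [lia|]. rewrite sumN_shift.
   rewrite (sumN_ext _ _ (fun j => (INR (S r) / INR (S M)) * (ff (INR r) j / ff (INR M) j))).
   2:{ intros j Hj. rewrite !ff_S_INR. field. split. apply ff_nz; lia. apply not_0_INR; lia. }
   rewrite sumN_scal. rewrite IHr by lia.
   change (ff (INR (S r)) 0) with 1; change (ff (INR (S M)) 0) with 1.
   assert (INR r <= INR M) by (apply le_INR; lia).
   rewrite (S_INR (S M)), (S_INR M), (S_INR r). assert (0 <= INR r) by apply pos_INR. field. split; lra. Qed.
Definition w0 (N r : nat) : R := / (INR N - INR r).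
Definition Aop (w : nat -> R) (r : nat) : R := sumN (S r) w / INR (S r).
Fixpoint Ait (j : nat) (w : nat -> R) : nat -> R :=
  match j with O => w | S j' => Ait j' (Aop w) end.
Definition gam (M j r : nat) : R := ff (INR r) j / ff (INR M) j.
Definition yk (M k r : nat) : R := / INR (S M) * sumN (S M) (fun j => gam M j r / INR (S j) ^ k).

Lemma Aop_gam : forall M j r, Aop (gam M j) r = gam M j r / INR (S j).
Proof. intros. unfold Aop, gam. unfold Rdiv at 1.
 rewrite (sumN_ext _ _ (fun i => ff (INR i) j * / ff (INR M) j)) by (intros; reflexivity).
 rewrite sumN_scalr. rewrite ff_hockey. rewrite ff_S_INR.
 assert (0 < INR (S r)) by apply INRS_pos. assert (0 < INR (S j)) by apply INRS_pos.
 unfold Rdiv.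
 replace (INR (S r) * ff (INR r) j * / INR (S j) * / ff (INR M) j * / INR (S r)) with ((INR (S r) * / INR (S r)) * (ff (INR r) j * / ff (INR M) j * / INR (S j))) by ring.
 rewrite Rinv_r by lra. ring. Qed.

Lemma Aop_yk : forall M k r, Aop (yk M k) r = yk M (S k) r.
Proof. intros. unfold Aop, yk. rewrite sumN_scal. rewrite sumN_exch.
 assert (0 < INR (S r)) by apply INRS_pos.
 rewrite (sumN_ext (S M) (fun j => gam M j r / INR (S j) ^ S k)
           (fun j => sumN (S r) (fun i => gam M j i / INR (S j) ^ k) / INR (S r))).
 - unfold Rdiv. rewrite sumN_scalr. ring.
 - intros j Hj. assert (0 < INR (S j)) by apply INRS_pos.
   assert (0 < INR (S j) ^ k) by (apply pow_lt; lra).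
   replace (gam M j r / INR (S j) ^ S k) with ((gam M j r / INR (S j)) / INR (S j) ^ k) by (change (INR (S j) ^ S k) with (INR (S j) * INR (S j) ^ k); field; split; lra).
   rewrite <- (Aop_gam M j r). unfold Aop. unfold Rdiv.
   rewrite sumN_scalr. ring. Qed.

Lemma Aop_ext : forall M w v, (forall r, (r <= M)%nat -> w r = v r) ->
  forall r, (r <= M)%nat -> Aop w r = Aop v r.
Proof. intros. unfold Aop. rewrite (sumN_ext _ w v); auto. intros; apply H0; lia. Qed.

Lemma Ait_yk : forall M k w i, (forall r, (r <= M)%nat -> w r = yk M i r) ->
  forall r, (r <= M)%nat -> Ait k w r = yk M (i + k) r.
Proof. intros M k; induction k; intros w i Hw r Hr; simpl. rewrite Nat.add_0_r; auto.
 rewrite (IHk (Aop w) (S i)). rewrite Nat.add_succ_r. reflexivity.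
 intros r' Hr'. rewrite <- Aop_yk. apply (Aop_ext M); auto. auto. Qed.

Lemma w0_yk : forall M r, (r <= M)%nat -> w0 (S M) r = yk M 0 r.
Proof. intros. unfold yk, w0. 
 rewrite (sumN_ext _ _ (fun j => ff (INR r) j / ff (INR M) j)) by (intros; unfold gam; simpl; field; apply ff_nz; lia).
 rewrite newton by auto. assert (INR r <= INR M) by (apply le_INR; lia). rewrite (S_INR M).
 assert (0 <= INR r) by apply pos_INR. field. split; lra. Qed.

Lemma ident : forall M k, sumN (S M) (Ait k (w0 (S M))) = Hp (S k) (S M).
Proof. intros. rewrite (sumN_ext _ _ (yk M k)).
 2:{ intros. apply (Ait_yk M k _ 0). intros; apply w0_yk; auto. lia. }
 unfold yk. rewrite sumN_scal. rewrite sumN_exch. unfold Hp. rewrite <- sumN_scal.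
 apply sumN_ext. intros j Hj.
 rewrite (sumN_ext _ _ (fun i => ff (INR i) j * (/ ff (INR M) j / INR (S j) ^ k))) by (intros; unfold gam; unfold Rdiv; ring).
 rewrite sumN_scalr. rewrite ff_hockey, ff_S_INR.
 assert (ff (INR M) j <> 0) by (apply ff_nz; lia). assert (0 < INR (S j)) by apply INRS_pos.
 assert (0 < INR (S M)) by apply INRS_pos. assert (0 < INR (S j) ^ k) by (apply pow_lt; lra).
 change (INR (S j) ^ S k) with (INR (S j) * INR (S j) ^ k). field. repeat split; lra. Qed.

Lemma abel : forall n (w f : nat -> R),
  sumN n (fun r => w r * f r) = sumN n (fun r => sumN (S r) w * (f r - f (S r))) + sumN n w * f n.
Proof. induction n; intros; simpl. ring. rewrite IHn. simpl. ring. Qed.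

Lemma pow_diff_up : forall j X Y, 0 <= Y <= X -> X ^ S j - Y ^ S j <= INR (S j) * (X - Y) * X ^ j.
Proof. induction j; intros X Y HXY. simpl. lra.
 change (X ^ S (S j)) with (X * X ^ S j). change (Y ^ S (S j)) with (Y * Y ^ S j).
 assert (IH := IHj X Y HXY). assert (0 <= Y ^ S j <= X ^ S j) by (split; [apply pow_le; lra| apply pow_incr; lra]).
 rewrite (S_INR (S j)). change (X ^ S j) with (X * X ^ j) in *.
 assert (0 <= X ^ j) by (apply pow_le; lra).
 replace (X * (X * X ^ j) - Y * Y ^ S j) with (X * (X * X ^ j - Y ^ S j) + (X - Y) * Y ^ S j) by ring.
 assert (X * (X * X ^ j - Y ^ S j) <= X * (INR (S j) * (X - Y) * X ^ j)) by (apply Rmult_le_compat_l; lra).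
 assert ((X - Y) * Y ^ S j <= (X - Y) * (X * X ^ j)) by (apply Rmult_le_compat_l; lra).
 lra. Qed.

Lemma pow_diff_lo : forall j X Y, 0 <= Y <= X -> X ^ S j - Y ^ S j >= INR (S j) * (X - Y) * Y ^ j.
Proof. induction j; intros X Y HXY. simpl. lra.
 change (X ^ S (S j)) with (X * X ^ S j). change (Y ^ S (S j)) with (Y * Y ^ S j).
 assert (IH := IHj X Y HXY). assert (0 <= Y ^ S j <= X ^ S j) by (split; [apply pow_le; lra| apply pow_incr; lra]).
 rewrite (S_INR (S j)). change (Y ^ S j) with (Y * Y ^ j) in *.
 assert (0 <= Y ^ j) by (apply pow_le; lra).
 replace (X * X ^ S j - Y * (Y * Y ^ j)) with (Y * (X ^ S j - Y * Y ^ j) + (X - Y) * X ^ S j) by ring.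
 assert (Y * (X ^ S j - Y * Y ^ j) >= Y * (INR (S j) * (X - Y) * Y ^ j)) by (apply Rle_ge, Rmult_le_compat_l; lra).
 assert ((X - Y) * X ^ S j >= (X - Y) * (Y * Y ^ j)) by (apply Rle_ge, Rmult_le_compat_l; lra).
 lra. Qed.

Definition PP (N j r : nat) : R := (H N - H r) ^ j.

Lemma Aop_nonneg : forall w, (forall r, 0 <= w r) -> forall r, 0 <= Aop w r.
Proof. intros. unfold Aop, Rdiv. apply Rmult_le_pos. apply sumN_nonneg; auto. left; apply Rinv_0_lt_compat, INRS_pos. Qed.

Lemma Aop_nonneg' : forall N w, (forall r, (r < N)%nat -> 0 <= w r) -> forall r, (r < N)%nat -> 0 <= Aop w r.
Proof. intros. unfold Aop, Rdiv. apply Rmult_le_pos. apply sumN_nonneg; intros; apply H0; lia. left; apply Rinv_0_lt_compat, INRS_pos. Qed.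

Lemma UP : forall N j w, (forall r, (r < N)%nat -> 0 <= w r) ->
  sumN N (fun r => w r * PP N j r) <= INR (fact j) * sumN N (Ait j w).
Proof. intros N j; induction j; intros w Hw.
 - simpl. unfold PP. simpl. rewrite (sumN_ext _ _ w) by (intros; ring). lra.
 - rewrite abel. replace (PP N (S j) N) with 0 by (unfold PP; rewrite Rminus_diag; simpl; ring). rewrite Rmult_0_r, Rplus_0_r.
   apply Rle_trans with (sumN N (fun r => INR (S j) * (Aop w r * PP N j r))).
   + apply sumN_le. intros r Hr. unfold PP.
     assert (HH : H r <= H (S r) <= H N) by (split; apply H_mono; lia).
     assert (Hd := pow_diff_up j (H N - H r) (H N - H (S r)) ltac:(lra)).
     rewrite H_S in *. unfold Aop.
     assert (0 <= sumN (S r) w) by (apply sumN_nonneg; intros; apply Hw; lia). assert (0 < INR (S r)) by apply INRS_pos.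
     replace (H N - H r - (H N - (H r + / INR (S r)))) with (/ INR (S r)) in Hd by ring.
     apply Rle_trans with (sumN (S r) w * (INR (S j) * / INR (S r) * (H N - H r) ^ j)).
     apply Rmult_le_compat_l; lra. unfold Rdiv. lra.
   + rewrite sumN_scal. simpl Ait. assert (IH := IHj (Aop w) (Aop_nonneg' N w Hw)).
     rewrite fact_simpl, mult_INR. assert (0 <= INR (S j)) by apply pos_INR.
     assert (INR (S j) * sumN N (fun r => Aop w r * PP N j r) <= INR (S j) * (INR (fact j) * sumN N (Ait j (Aop w)))) by (apply Rmult_le_compat_l; lra).
     lra. Qed.

Lemma mono_chain : forall N (v : nat -> R), (forall r, (S r < N)%nat -> v r <= v (S r)) ->
  forall a b, (a <= b)%nat -> (b < N)%nat -> v a <= v b.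
Proof. intros N v Hv a b Hab; induction Hab; intros; [lra|].
 apply Rle_trans with (v m); [apply IHHab; lia| apply Hv; lia]. Qed.

Lemma Aop_props : forall N v, (forall r, (r < N)%nat -> 0 <= v r) ->
  (forall r, (S r < N)%nat -> v r <= v (S r)) ->
  (forall r, (r < N)%nat -> 0 <= Aop v r) /\ (forall r, (S r < N)%nat -> Aop v r <= Aop v (S r))
  /\ (forall r, (r < N)%nat -> Aop v r <= v r).
Proof. intros N v H0 H1.
 assert (Hle : forall r, (r < N)%nat -> sumN (S r) v <= INR (S r) * v r).
 { intros. rewrite <- sumN_const. apply sumN_le. intros. apply (mono_chain N); auto; lia. }
 assert (Hnn : forall r, (r < N)%nat -> 0 <= sumN (S r) v) by (intros; apply sumN_nonneg; intros; apply H0; lia).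
 split; [|split].
 - intros. unfold Aop, Rdiv. apply Rmult_le_pos; auto. left; apply Rinv_0_lt_compat, INRS_pos.
 - intros r Hr. unfold Aop. change (sumN (S (S r)) v) with (sumN (S r) v + v (S r)).
   assert (Hs := Hle r ltac:(lia)). assert (Hm := H1 r Hr). assert (Hn := Hnn r ltac:(lia)).
   rewrite (S_INR (S r)). assert (0 < INR (S r)) by apply INRS_pos.
   apply Rmult_le_reg_r with (INR (S r) * (INR (S r) + 1)). nra.
   unfold Rdiv. field_simplify; try lra. nra.
 - intros r Hr. unfold Aop. assert (Hs := Hle r Hr). assert (0 < INR (S r)) by apply INRS_pos.
   apply Rmult_le_reg_r with (INR (S r)). lra. unfold Rdiv. rewrite Rmult_assoc, Rinv_l by lra. lra.
Qed.

Lemma Ait_bound_gen : forall N i v, (forall r, (r < N)%nat -> 0 <= v r) ->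
  (forall r, (S r < N)%nat -> v r <= v (S r)) -> (forall r, (r < N)%nat -> v r <= w0 N r) ->
  forall r, (r < N)%nat -> 0 <= Ait i v r <= w0 N r.
Proof. intros N i; induction i; intros v H0 H1 H2 r Hr; simpl. split; auto.
 destruct (Aop_props N v H0 H1) as [A0 [A1 A2]]. apply IHi; auto.
 intros; apply Rle_trans with (v r0); auto. Qed.

Lemma w0_pos : forall N r, (r < N)%nat -> 0 < w0 N r.
Proof. intros. unfold w0. apply Rinv_0_lt_compat. assert (INR r < INR N) by (apply lt_INR; lia). lra. Qed.

Lemma Ait_bound : forall N i r, (r < N)%nat -> 0 <= Ait i (w0 N) r <= w0 N r.
Proof. intros. apply Ait_bound_gen; auto.
 - intros; left; apply w0_pos; auto.
 - intros r0 Hr0. unfold w0. assert (INR (S r0) < INR N) by (apply lt_INR; lia). rewrite S_INR in *.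
   apply Rinv_le_contravar; lra.
 - intros; lra. Qed.

Definition GG (N k : nat) : R := (1 + H N) ^ k.
Definition BB (N : nat) : R := sumN N (fun r => w0 N r / INR (S r)).

Lemma PP_nonneg : forall N j r, (r <= N)%nat -> 0 <= PP N j r.
Proof. intros. unfold PP. apply pow_le. assert (H r <= H N) by (apply H_mono; auto). lra. Qed.

Lemma GG_ge1 : forall N k, 1 <= GG N k.
Proof. intros. unfold GG. apply pow_R1_Rle. assert (0 <= H N) by apply H_nonneg. lra. Qed.

Lemma BB_nonneg : forall N, 0 <= BB N.
Proof. intros. apply sumN_nonneg. intros. unfold Rdiv. apply Rmult_le_pos. left; apply w0_pos; auto.
 left; apply Rinv_0_lt_compat, INRS_pos. Qed.

Lemma Pdiff_bound : forall N k j r, (j <= k)%nat -> (r < N)%nat ->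
  PP N j r - PP N j (S r) <= INR j * GG N k / INR (S r).
Proof. intros N k j r Hj Hr. destruct j as [|j].
 - unfold PP. simpl. unfold Rdiv. rewrite Rmult_0_l, Rmult_0_l. lra.
 - unfold PP. assert (HH : H r <= H (S r) <= H N) by (split; apply H_mono; lia).
   assert (Hd := pow_diff_up j (H N - H r) (H N - H (S r)) ltac:(lra)).
   rewrite H_S in *. assert (0 < INR (S r)) by apply INRS_pos.
   replace (H N - H r - (H N - (H r + / INR (S r)))) with (/ INR (S r)) in Hd by ring.
   assert (0 <= H r) by apply H_nonneg.
   assert (Hx : (H N - H r) ^ j <= GG N k).
   { unfold GG. apply Rle_trans with ((1 + H N) ^ j). apply pow_incr; lra.
     apply Rle_pow. assert (0 <= H N) by apply H_nonneg. lra. lia. }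
   assert (0 <= INR (S j)) by apply pos_INR.
   assert (0 < / INR (S r)) by (apply Rinv_0_lt_compat; lra).
   apply Rle_trans with (INR (S j) * / INR (S r) * (H N - H r) ^ j). lra.
   unfold Rdiv. rewrite (Rmult_comm (INR (S j) * GG N k)). rewrite <- Rmult_assoc.
   rewrite (Rmult_comm _ (INR (S j))). apply Rmult_le_compat_l. nra. auto. Qed.

Lemma LOW : forall N k j, (j <= k)%nat -> forall w, (forall i r, (r < N)%nat -> 0 <= Ait i w r <= w0 N r) ->
  sumN N (fun r => w r * PP N j r) >= INR (fact j) * sumN N (Ait j w) - INR (fact j) * INR (j * j) * GG N k * BB N.
Proof. intros N k j; induction j; intros Hj w Hw.
 - simpl. unfold PP. simpl. rewrite (sumN_ext _ _ w) by (intros; ring). lra.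
 - rewrite abel. replace (PP N (S j) N) with 0 by (unfold PP; rewrite Rminus_diag; simpl; ring). rewrite Rmult_0_r, Rplus_0_r.
   assert (GB : 0 <= GG N k * BB N) by (apply Rmult_le_pos; [generalize (GG_ge1 N k); lra| apply BB_nonneg]).
   apply Rge_trans with (sumN N (fun r => INR (S j) * (Aop w r * PP N j r) - INR (S j) * INR j * GG N k * (w0 N r / INR (S r)))).
   + apply Rle_ge, sumN_le. intros r Hr. unfold PP.
     assert (HH : H r <= H (S r) <= H N) by (split; apply H_mono; lia).
     assert (Hd := pow_diff_lo j (H N - H r) (H N - H (S r)) ltac:(lra)).
     assert (Hpd := Pdiff_bound N k j r ltac:(lia) Hr). unfold PP in Hpd.
     assert (HA := Hw 1%nat r Hr). change (Ait 1 w r) with (Aop w r) in HA.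
     rewrite H_S in *. unfold Aop in *.
     assert (0 <= sumN (S r) w) by (apply sumN_nonneg; intros; apply (Hw O); lia). assert (0 < INR (S r)) by apply INRS_pos.
     replace (H N - H r - (H N - (H r + / INR (S r)))) with (/ INR (S r)) in Hd by ring.
     set (X := (H N - H r) ^ j) in *. set (Y := (H N - (H r + / INR (S r))) ^ j) in *.
     set (Wr := sumN (S r) w) in *.
     assert (0 <= INR j) by apply pos_INR. assert (0 <= GG N k) by (generalize (GG_ge1 N k); lra).
     assert (Hsj : 0 < INR (S j)) by apply INRS_pos.
     apply Rle_trans with (Wr * (INR (S j) * / INR (S r) * Y)).
     * unfold Rdiv in *. 
       assert (Wr * / INR (S r) * (X - INR j * GG N k * / INR (S r)) <= Wr * / INR (S r) * Y).
       { apply Rmult_le_compat_l. apply Rmult_le_pos; [lra|left; apply Rinv_0_lt_compat; lra]. lra. }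
       assert (INR (S j) * INR j * GG N k * (Wr * / INR (S r)) * / INR (S r) <= INR (S j) * INR j * GG N k * w0 N r * / INR (S r)).
       { apply Rmult_le_compat_r. left; apply Rinv_0_lt_compat; lra. apply Rmult_le_compat_l. apply Rmult_le_pos; [apply Rmult_le_pos|]; lra. lra. }
       nra.
     * apply Rmult_le_compat_l; lra.
   + rewrite sumN_minus, !sumN_scal. fold (BB N). simpl Ait.
     assert (IH := IHj ltac:(lia) (Aop w) (fun i r Hr => Hw (S i) r Hr)).
     rewrite fact_simpl, !mult_INR.
     set (F := INR (fact j)) in *. set (J := INR j) in *. set (Sg := sumN N (Ait j (Aop w))) in *.
     set (T := sumN N (fun r => Aop w r * PP N j r)) in *.
     assert (F1 : 1 <= F) by (unfold F; apply (le_INR 1); apply lt_O_fact).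
     assert (0 <= J) by apply pos_INR. rewrite S_INR. fold J. rewrite mult_INR in IH. fold J in IH.
     set (g := GG N k) in *. set (b := BB N) in *.
     assert (Hk : 0 <= (J + 1) * (T - (F * Sg - F * (J * J) * g * b))) by (apply Rmult_le_pos; lra).
     assert (Hk2 : 0 <= (J+1) * (F * (2 * J + 1) - J) * (g * b)) by (apply Rmult_le_pos; [apply Rmult_le_pos; nra|lra]).
     apply Rminus_ge. 
     replace ((J + 1) * T - (J + 1) * J * g * b - ((J + 1) * F * Sg - (J + 1) * F * ((J + 1) * (J + 1)) * g * b))
       with ((J + 1) * (T - (F * Sg - F * (J * J) * g * b)) + (J+1) * (F * (2 * J + 1) - J) * (g * b)) by ring.
     lra. Qed.

Lemma Hp1 : forall N, Hp 1 N = H N.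
Proof. intros. unfold Hp, H. apply sumN_ext. intros. rewrite pow_1. reflexivity. Qed.

Lemma BB_eq : forall M, BB (S M) = 2 * H (S M) / INR (S (S M)).
Proof. intros. unfold BB.
 rewrite (sumN_ext _ _ (fun r => / INR (S (S M)) * (w0 (S M) r + / INR (S r)))).
 - rewrite sumN_scal, sumN_plus. fold (H (S M)).
   assert (E := ident M 0). simpl Ait in E. rewrite E, Hp1. assert (0 < INR (S (S M))) by apply INRS_pos.
   field. lra.
 - intros r Hr. unfold w0. assert (INR r < INR (S M)) by (apply lt_INR; lia). rewrite (S_INR (S M)), (S_INR r).
   assert (0 <= INR r) by apply pos_INR. field. repeat split; lra. Qed.

Lemma H_diff2 : forall r, H r - H (r - 2) <= 6 / INR (S r).
Proof. intros [|[|r]]. simpl. unfold Rdiv. assert (0 < / INR 1) by (apply Rinv_0_lt_compat; apply INRS_pos). lra.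
 simpl (1 - 2)%nat. unfold H. simpl sumN. simpl INR. lra.
 replace (S (S r) - 2)%nat with r by lia. rewrite !H_S. rewrite !S_INR.
 assert (0 <= INR r) by apply pos_INR.
 assert (/ (INR r + 1) <= 3 / (INR r + 1 + 1 + 1)) by (apply Rmult_le_reg_r with ((INR r + 1)*(INR r + 1 + 1 + 1)); [nra| field_simplify; lra]).
 assert (/ (INR r + 1 + 1) <= 3 / (INR r + 1 + 1 + 1)) by (apply Rmult_le_reg_r with ((INR r + 1 + 1)*(INR r + 1 + 1 + 1)); [nra| field_simplify; lra]).
 lra. Qed.

Lemma UPPER_AN : forall M k', let K := S M in let k := S k' in
  sumN K (fun r => w0 K r * PP K k (r - 2)) <= INR (fact k) * Hp (S k) K + 6 * INR k * GG K k * BB K.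
Proof. intros M k' K k. unfold K, k in *. clear K k. set (K := S M). set (k := S k').
 apply Rle_trans with (sumN K (fun r => w0 K r * PP K k r + (6 * INR k * GG K k) * (w0 K r / INR (S r)))).
 - apply sumN_le. intros r Hr. unfold PP.
   assert (Hm1 : H (r - 2) <= H r) by (apply H_mono; lia). assert (Hm2 : H r <= H K) by (apply H_mono; lia).
   assert (Hd := pow_diff_up k' (H K - H (r - 2)) (H K - H r) ltac:(lra)).
   fold k in Hd. assert (Hd2 := H_diff2 r). assert (Hw := w0_pos K r Hr).
   assert (0 <= H (r - 2)) by apply H_nonneg.
   assert (Hx : (H K - H (r - 2)) ^ k' <= GG K k).
   { unfold GG. apply Rle_trans with ((1 + H K) ^ k'). apply pow_incr; lra.
     apply Rle_pow. assert (0 <= H K) by apply H_nonneg. lra. unfold k; lia. }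
   assert (0 <= (H K - H (r - 2)) ^ k') by (apply pow_le; lra).
   assert (0 <= INR k) by apply pos_INR.
   replace (H K - H (r - 2) - (H K - H r)) with (H r - H (r - 2)) in Hd by ring.
   change (INR (S k')) with (INR k) in Hd.
   assert (INR k * (H r - H (r - 2)) * (H K - H (r - 2)) ^ k' <= INR k * (6 / INR (S r)) * GG K k).
   { apply Rmult_le_compat. apply Rmult_le_pos; lra. lra. apply Rmult_le_compat_l; lra. lra. }
   assert (w0 K r * ((H K - H (r - 2)) ^ k - (H K - H r) ^ k) <= w0 K r * (INR k * (6 / INR (S r)) * GG K k)) by (apply Rmult_le_compat_l; lra).
   unfold Rdiv in *. lra.
 - rewrite sumN_plus, sumN_scal. fold (BB K).
   assert (HU := UP K k (w0 K) (fun r Hr => Rlt_le _ _ (w0_pos K r Hr))).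
   unfold K in HU. rewrite ident in HU. fold K in HU. lra. Qed.

Lemma LOWER_AN : forall M k, let N := S M in
  sumN N (fun r => w0 N r * PP N k (S r)) >=
  INR (fact k) * Hp (S k) N - (INR (fact k) * INR (k * k) + INR k) * GG N k * BB N.
Proof. intros M k N.
 apply Rge_trans with (sumN N (fun r => w0 N r * PP N k r - (INR k * GG N k) * (w0 N r / INR (S r)))).
 - apply Rle_ge, sumN_le. intros r Hr. assert (Hp := Pdiff_bound N k k r (le_n _) Hr).
   assert (Hw := w0_pos N r Hr). unfold Rdiv in *.
   assert (w0 N r * (PP N k r - PP N k (S r)) <= w0 N r * (INR k * GG N k * / INR (S r))) by (apply Rmult_le_compat_l; lra).
   lra.
 - rewrite sumN_minus, sumN_scal. fold (BB N).
   assert (HL := LOW N k k (le_n _) (w0 N) (fun i r Hr => Ait_bound N i r Hr)).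
   unfold N in HL. rewrite ident in HL. fold N in HL. lra. Qed.

Definition seg := (R * (R * R))%type.
Definition tv (q : seg) (y : R) : R :=
  if Rle_dec (fst (snd q)) y then if Rle_dec y (snd (snd q)) then fst q else 0 else 0.
Definition val1 (L : list seg) (y : R) : R := fold_right (fun q acc => tv q y + acc) 0 L.
Definition int1 (L : list seg) : R := fold_right (fun q acc => fst q * (snd (snd q) - fst (snd q)) + acc) 0 L.

Lemma listmin : forall P p, let m := fold_right Rmin p P in
  (m = p \/ In m P) /\ m <= p /\ forall e, In e P -> m <= e.
Proof. induction P; intros p m; simpl in m. subst m; split; [left|split]; auto; [lra|intros e []].
 destruct (IHP p) as [H1 [H2 H3]]. subst m. set (m' := fold_right Rmin p P) in *.
 split; [|split]. unfold Rmin; destruct (Rle_dec a m'). right; left; auto. destruct H1; [left|right;right]; auto.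
 apply Rle_trans with m'; auto. apply Rmin_r.
 intros e [He|He]. subst; apply Rmin_l. apply Rle_trans with m'; auto. apply Rmin_r. Qed.

Definition sweep_map (p1 : R) (q : seg) : seg :=
  if Rlt_dec (snd (snd q)) p1 then (0, (p1, p1)) else (fst q, (Rmax (fst (snd q)) p1, snd (snd q))).

Lemma sweep_val : forall p1 L y, val1 (map (sweep_map p1) L) y = if Rlt_dec y p1 then 0 else val1 L y.
Proof. intros p1 L y; induction L as [|q L IH]; simpl. destruct (Rlt_dec y p1); auto.
 rewrite IH. destruct q as [c [l h]]. unfold sweep_map, tv; simpl.
 destruct (Rlt_dec h p1); simpl.
 - destruct (Rle_dec p1 y); destruct (Rle_dec y p1); destruct (Rlt_dec y p1); destruct (Rle_dec l y); destruct (Rle_dec y h); try lra.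
 - destruct (Rlt_dec y p1).
   + destruct (Rle_dec (Rmax l p1) y). assert (p1 <= Rmax l p1) by apply Rmax_r. lra. lra.
   + assert (l <= Rmax l p1) by apply Rmax_l.
     destruct (Rle_dec (Rmax l p1) y); destruct (Rle_dec l y); destruct (Rle_dec y h); try lra;
     assert (Rmax l p1 <= y) by (apply Rmax_lub; lra); lra. Qed.

Lemma sweep_int : forall p0 p1 P L, p0 < p1 ->
  (forall e, In e P -> e = p0 \/ p1 <= e) ->
  (forall q, In q L -> In (fst (snd q)) P /\ In (snd (snd q)) P /\ fst (snd q) <= snd (snd q)) ->
  int1 L = int1 (map (sweep_map p1) L) + (p1 - p0) * val1 L ((p0 + p1) / 2).
Proof. intros p0 p1 P L Hlt HP; induction L as [|q L IH]; intros HL; simpl. ring.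
 rewrite IH by (intros; apply HL; right; auto).
 destruct q as [c [l h]]. destruct (HL (c,(l,h)) (or_introl eq_refl)) as [Hl [Hh Hlh]]; simpl in *.
 apply HP in Hl; apply HP in Hh. unfold sweep_map, tv; simpl.
 destruct (Rlt_dec h p1).
 - simpl. destruct (Rle_dec l ((p0 + p1) / 2)); destruct (Rle_dec ((p0 + p1) / 2) h); try lra.
   destruct Hh; destruct Hl; try lra. subst. ring.
 - simpl. destruct Hl as [Hl|Hl].
   + subst. rewrite Rmax_right by lra. destruct (Rle_dec p0 ((p0 + p1) / 2)); [|lra].
     destruct (Rle_dec ((p0 + p1) / 2) h); [|lra]. ring.
   + rewrite Rmax_left by lra. destruct (Rle_dec l ((p0 + p1) / 2)); [lra|]. ring. Qed.

Lemma sweep : forall n P L, (length P <= n)%nat ->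
  (forall q, In q L -> In (fst (snd q)) P /\ In (snd (snd q)) P /\ fst (snd q) <= snd (snd q)) ->
  (forall y, 0 <= val1 L y) -> 0 <= int1 L.
Proof. induction n; intros P L HPn HL Hv.
 - destruct P; [|simpl in HPn; lia]. destruct L as [|q L]. simpl; lra. destruct (HL q (or_introl eq_refl)) as [[] _].
 - destruct P as [|p P']. destruct L as [|q L]. simpl; lra. destruct (HL q (or_introl eq_refl)) as [[] _].
   destruct (listmin P' p) as [Hm1 [Hm2 Hm3]]. set (p0 := fold_right Rmin p P') in *.
   assert (Hp0 : In p0 (p :: P')) by (destruct Hm1; [left; auto| right; auto]).
   assert (Hp0le : forall e, In e (p :: P') -> p0 <= e) by (intros e [He|He]; [subst; auto| auto]).
   assert (HQlen : (length (remove Req_dec_T p0 (p :: P')) < length (p :: P'))%nat) by (apply remove_length_lt; auto).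
   destruct (remove Req_dec_T p0 (p :: P')) as [|q Q'] eqn:EQ.
   +
     assert (Hall : forall e, In e (p :: P') -> e = p0).
     { intros e He. destruct (Req_dec_T e p0); auto. assert (Hin : In e (remove Req_dec_T p0 (p :: P'))) by (apply in_in_remove; auto). rewrite EQ in Hin. destruct Hin. }
     clear -HL Hall. induction L as [|q L IH]; simpl. lra.
     destruct (HL q (or_introl eq_refl)) as [H1 [H2 _]]. rewrite (Hall _ H1), (Hall _ H2).
     rewrite IH. lra. intros; apply HL; right; auto.
   + destruct (listmin Q' q) as [Hn1 [Hn2 Hn3]]. set (p1 := fold_right Rmin q Q') in *.
     assert (Hp1 : In p1 (remove Req_dec_T p0 (p :: P'))) by (rewrite EQ; destruct Hn1; [left; auto| right; auto]).
     assert (Hp1le : forall e, In e (remove Req_dec_T p0 (p :: P')) -> p1 <= e) by (rewrite EQ; intros e [He|He]; [subst; auto| auto]).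
     apply in_remove in Hp1 as Hp1'. destruct Hp1' as [Hp1P Hp1ne].
     assert (Hlt : p0 < p1) by (assert (p0 <= p1) by auto; lra).
     assert (HP : forall e, In e (p :: P') -> e = p0 \/ p1 <= e).
     { intros e He. destruct (Req_dec_T e p0); [left; auto|right]. apply Hp1le. apply in_in_remove; auto. }
     rewrite (sweep_int p0 p1 (p :: P') L Hlt HP HL).
     assert (0 <= int1 (map (sweep_map p1) L)).
     { apply (IHn (q :: Q')). simpl in HQlen, HPn |- *. lia.
       - intros q' Hq'. apply in_map_iff in Hq'. destruct Hq' as [[c [l h]] [E Hin]]. subst q'.
         destruct (HL _ Hin) as [Hl [Hh Hlh]]; cbn [fst snd] in *. unfold sweep_map; cbn [fst snd].
         assert (Hp1Q : In p1 (q :: Q')) by (destruct Hn1; [left; auto| right; auto]).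
         destruct (Rlt_dec h p1); cbn [fst snd]. split; [|split]; [auto| auto| lra].
         assert (HhQ : In h (q :: Q')) by (rewrite <- EQ; apply in_in_remove; auto; intro; subst; lra).
         split; [|split]; auto.
         destruct (HP l Hl). subst. rewrite Rmax_right by lra. rewrite <- EQ; auto.
         rewrite Rmax_left by lra. rewrite <- EQ. apply in_in_remove; auto. intro; subst; lra.
         apply Rmax_lub; lra.
       - intros y. rewrite sweep_val. destruct (Rlt_dec y p1); auto. lra. }
     assert (0 <= val1 L ((p0 + p1) / 2)) by auto. nra. Qed.

Definition tb (a b y : R) : bool := if Rle_dec a y then if Rle_dec y b then true else false else false.

Lemma in_boxb_S : forall m B x, in_boxb (S m) B x = (in_boxb m B x && tb (lo B m) (hi B m) (x m))%bool.
Proof. intros. unfold in_boxb. rewrite seq_S, forallb_app. simpl. rewrite Bool.andb_true_r. reflexivity. Qed.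

Lemma in_boxb_ext : forall m B x x', (forall i, (i < m)%nat -> x i = x' i) -> in_boxb m B x = in_boxb m B x'.
Proof. induction m; intros B x x' Hx. reflexivity. rewrite !in_boxb_S. rewrite (IHm B x x') by (intros; apply Hx; lia).
 rewrite Hx by lia. reflexivity. Qed.

Lemma in_boxb_0 : forall B x, in_boxb 0 B x = true.
Proof. reflexivity. Qed.

Definition upd (x : nat -> R) (m : nat) (y : R) : nat -> R := fun i => if Nat.eq_dec i m then y else x i.

Definition slice (m : nat) (y : R) (u : step_fun) : step_fun :=
  map (fun q => (if tb (lo (snd q) m) (hi (snd q) m) y then fst q else 0, snd q)) u.

Definition proj (m : nat) (u : step_fun) : list seg :=
  map (fun q => (fst q * box_vol m (snd q), (lo (snd q) m, hi (snd q) m))) u.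

Lemma step_val_slice : forall m y u x, step_val m (slice m y u) x = step_val (S m) u (upd x m y).
Proof. intros. induction u as [|q u IH]; simpl. reflexivity. unfold step_val in *; simpl. rewrite IH.
 rewrite in_boxb_S. rewrite (in_boxb_ext m (snd q) (upd x m y) x) by (intros; unfold upd; destruct (Nat.eq_dec i m); [lia|auto]).
 unfold upd at 2. destruct (Nat.eq_dec m m); [|lia].
 destruct (in_boxb m (snd q) x); destruct (tb (lo (snd q) m) (hi (snd q) m) y); simpl; reflexivity. Qed.

Lemma step_int_slice : forall m y u, step_int m (slice m y u) = val1 (proj m u) y.
Proof. intros. induction u as [|q u IH]; simpl. reflexivity. unfold step_int in *; simpl. rewrite IH.
 unfold tv, tb; simpl. destruct (Rle_dec (lo (snd q) m) y); destruct (Rle_dec y (hi (snd q) m)); simpl; ring. Qed.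

Lemma int1_proj : forall m u, int1 (proj m u) = step_int (S m) u.
Proof. intros. induction u as [|q u IH]; simpl. reflexivity. unfold step_int in *; simpl. rewrite IH.
 unfold box_vol. simpl prodR. ring. Qed.

Definition boxes_ok (m : nat) (u : step_fun) : Prop :=
  forall q, In q u -> forall i, (i < m)%nat -> lo (snd q) i <= hi (snd q) i.

Lemma MON0 : forall m u, boxes_ok m u -> (forall x, 0 <= step_val m u x) -> 0 <= step_int m u.
Proof. induction m; intros u Hok Hv.
 - assert (E : step_int 0 u = step_val 0 u (fun _ => 0)).
   { clear. induction u as [|q u IH]; simpl. reflexivity. unfold step_int, step_val in *; simpl. rewrite IH.
     unfold box_vol; simpl. ring. }
   rewrite E; auto.
 - rewrite <- int1_proj.
   apply (sweep _ (flat_map (fun q => fst (snd q) :: snd (snd q) :: nil) (proj m u)) _ (le_n _)).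
   + intros q Hq. split; [|split].
     apply in_flat_map. exists q; split; auto; left; auto.
     apply in_flat_map. exists q; split; auto; right; left; auto.
     unfold proj in Hq. apply in_map_iff in Hq. destruct Hq as [q' [E Hq']]. subst q. simpl. apply Hok; auto.
   + intros y. rewrite <- step_int_slice. apply IHm.
     intros q Hq i Hi. unfold slice in Hq. apply in_map_iff in Hq. destruct Hq as [q' [E Hq']]. subst q. simpl. apply Hok; auto.
     intros x. rewrite step_val_slice. auto. Qed.

Definition negl (s : step_fun) : step_fun := map (fun q => (- fst q, snd q)) s.

Lemma step_val_app : forall m s t x, step_val m (s ++ t) x = step_val m s x + step_val m t x.
Proof. intros. induction s as [|q s IH]; simpl. unfold step_val; simpl; ring. unfold step_val in *; simpl. rewrite IH. ring. Qed.

Lemma step_int_app : forall m s t, step_int m (s ++ t) = step_int m s + step_int m t.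
Proof. intros. induction s as [|q s IH]; simpl. unfold step_int; simpl; ring. unfold step_int in *; simpl. rewrite IH. ring. Qed.

Lemma step_val_neg : forall m s x, step_val m (negl s) x = - step_val m s x.
Proof. intros. induction s as [|q s IH]; simpl. unfold step_val; simpl; ring. unfold step_val in *; simpl. rewrite IH.
 destruct (in_boxb m (snd q) x); ring. Qed.

Lemma step_int_neg : forall m s, step_int m (negl s) = - step_int m s.
Proof. intros. induction s as [|q s IH]; simpl. unfold step_int; simpl; ring. unfold step_int in *; simpl. rewrite IH. ring. Qed.

Lemma MON : forall m s t, boxes_ok m s -> boxes_ok m t ->
  (forall x, step_val m s x <= step_val m t x) -> step_int m s <= step_int m t.
Proof. intros m s t Hs Ht Hv. assert (0 <= step_int m (t ++ negl s)).
 { apply MON0. intros q Hq. apply in_app_or in Hq. destruct Hq as [Hq|Hq]. apply Ht; auto.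
   unfold negl in Hq. apply in_map_iff in Hq. destruct Hq as [q' [E Hq']]. subst; simpl. apply Hs; auto.
   intros x. rewrite step_val_app, step_val_neg. specialize (Hv x). lra. }
 rewrite step_int_app, step_int_neg in H0. lra. Qed.

Definition ext_box (m : nat) (q : R * box) (p : seg) : R * box :=
  (fst q * fst p, Box (upd (lo (snd q)) m (fst (snd p))) (upd (hi (snd q)) m (snd (snd p)))).

Fixpoint prodlist (L : nat -> list seg) (m : nat) : step_fun :=
  match m with
  | O => (1, Box (fun _ => 0) (fun _ => 0)) :: nil
  | S m' => flat_map (fun q => map (ext_box m' q) (L m')) (prodlist L m')
  end.

Lemma prodR_ext : forall m f g, (forall i, (i < m)%nat -> f i = g i) -> prodR m f = prodR m g.
Proof. induction m; intros; simpl; auto. rewrite (IHm f g), H0; auto. Qed.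

Lemma in_boxb_bext : forall m B B' x, (forall i, (i < m)%nat -> lo B i = lo B' i /\ hi B i = hi B' i) ->
  in_boxb m B x = in_boxb m B' x.
Proof. induction m; intros B B' x HB. reflexivity. rewrite !in_boxb_S. rewrite (IHm B B' x) by (intros; apply HB; lia).
 destruct (HB m (Nat.lt_succ_diag_r m)) as [E1 E2]. rewrite E1, E2. reflexivity. Qed.

Lemma step_val_flat : forall m (F : R * box -> step_fun) l x,
  step_val m (flat_map F l) x = fold_right (fun q acc => step_val m (F q) x + acc) 0 l.
Proof. intros. induction l as [|q l IH]; simpl. reflexivity. rewrite step_val_app, IH. reflexivity. Qed.

Lemma step_int_flat : forall m (F : R * box -> step_fun) l,
  step_int m (flat_map F l) = fold_right (fun q acc => step_int m (F q) + acc) 0 l.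
Proof. intros. induction l as [|q l IH]; simpl. reflexivity. rewrite step_int_app, IH. reflexivity. Qed.

Lemma upd_lt : forall f m v i, (i < m)%nat -> upd f m v i = f i.
Proof. intros. unfold upd. destruct (Nat.eq_dec i m); [lia|auto]. Qed.
Lemma upd_eq : forall f m v, upd f m v m = v.
Proof. intros. unfold upd. destruct (Nat.eq_dec m m); [auto|lia]. Qed.

Lemma inner_val : forall m q Lm x, step_val (S m) (map (ext_box m q) Lm) x
   = (if in_boxb m (snd q) x then fst q else 0) * val1 Lm (x m).
Proof. intros. induction Lm as [|p L' IHL]; simpl. unfold step_val; simpl; ring.
   unfold step_val in *; simpl. rewrite IHL. rewrite in_boxb_S. unfold ext_box; simpl.
   rewrite (in_boxb_bext m _ (snd q)) by (intros; simpl; rewrite !upd_lt; auto).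
   rewrite upd_eq, upd_eq. unfold tv, tb. destruct (in_boxb m (snd q) x); destruct (Rle_dec (fst (snd p)) (x m)); destruct (Rle_dec (x m) (snd (snd p))); simpl; ring. Qed.

Lemma step_val_pl : forall L m x, step_val m (prodlist L m) x = prodR m (fun i => val1 (L i) (x i)).
Proof. intros L m x. induction m; simpl. unfold step_val; simpl. ring.
 rewrite step_val_flat. rewrite <- IHm. clear IHm.
 induction (prodlist L m) as [|q l IH]; simpl. unfold step_val; simpl; ring.
 rewrite IH. rewrite inner_val. unfold step_val; simpl. ring. Qed.

Lemma box_vol_ext : forall m B B', (forall i, (i < m)%nat -> lo B i = lo B' i /\ hi B i = hi B' i) -> box_vol m B = box_vol m B'.
Proof. intros. unfold box_vol. apply prodR_ext. intros. destruct (H0 i H1) as [E1 E2]. rewrite E1, E2. auto. Qed.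

Lemma inner_int : forall m q Lm, step_int (S m) (map (ext_box m q) Lm) = fst q * box_vol m (snd q) * int1 Lm.
Proof. intros. induction Lm as [|p L' IHL]; simpl. unfold step_int; simpl; ring.
   unfold step_int in *; simpl. rewrite IHL. unfold ext_box.
   set (B' := {| lo := upd (lo (snd q)) m (fst (snd p)); hi := upd (hi (snd q)) m (snd (snd p)) |}).
   change (box_vol (S m) B') with (box_vol m B' * (hi B' m - lo B' m)).
   rewrite (box_vol_ext m B' (snd q)) by (intros; unfold B'; simpl; rewrite !upd_lt; auto). unfold B'; simpl. rewrite !upd_eq. ring. Qed.

Lemma step_int_pl : forall L m, step_int m (prodlist L m) = prodR m (fun i => int1 (L i)).
Proof. intros L m. induction m; simpl. unfold step_int; simpl. unfold box_vol; simpl. ring.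
 rewrite step_int_flat. rewrite <- IHm. clear IHm.
 induction (prodlist L m) as [|q l IH]; simpl. unfold step_int; simpl; ring.
 rewrite IH. rewrite inner_int. unfold step_int; simpl. ring. Qed.

Lemma pl_ok : forall L m, (forall i p, (i < m)%nat -> In p (L i) -> fst (snd p) <= snd (snd p)) ->
  boxes_ok m (prodlist L m).
Proof. intros L m; induction m; intros HL q Hq i Hi. lia.
 simpl in Hq. apply in_flat_map in Hq. destruct Hq as [q' [Hq' Hq]]. apply in_map_iff in Hq. destruct Hq as [p [E Hp]]. subst q. unfold ext_box; simpl.
 unfold upd. destruct (Nat.eq_dec i m). subst i. apply (HL m); auto.
 apply (IHm (fun i0 p0 Hi0 Hp0 => HL i0 p0 ltac:(lia) Hp0) q' Hq' i). lia. Qed.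

Lemma pl_nonneg : forall L m, (forall i p, (i < m)%nat -> In p (L i) -> 0 <= fst p) ->
  forall q, In q (prodlist L m) -> 0 <= fst q.
Proof. intros L m; induction m; intros HL q Hq. simpl in Hq. destruct Hq as [E|[]]. subst; simpl; lra.
 simpl in Hq. apply in_flat_map in Hq. destruct Hq as [q' [Hq' Hq]]. apply in_map_iff in Hq. destruct Hq as [p [E Hp]]. subst q. unfold ext_box; simpl.
 apply Rmult_le_pos. apply (IHm (fun i0 p0 Hi0 Hp0 => HL i0 p0 ltac:(lia) Hp0) q' Hq'). apply (HL m); auto. Qed.

Lemma prodR_S0 : forall n g, prodR (S n) g = g O * prodR n (fun i => g (S i)).
Proof. induction n; intros; simpl in *. ring. rewrite IHn. ring. Qed.

Lemma prodR_const : forall n c, prodR n (fun _ => c) = c ^ n.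
Proof. induction n; intros; simpl; auto. rewrite IHn. ring. Qed.

Lemma prodR_mult : forall n f g, prodR n (fun i => f i * g i) = prodR n f * prodR n g.
Proof. induction n; intros; simpl. ring. rewrite IHn. ring. Qed.

Lemma prodR_le : forall n f g, (forall i, (i < n)%nat -> 0 <= f i <= g i) -> prodR n f <= prodR n g.
Proof. induction n; intros; simpl. lra. assert (prodR n f <= prodR n g) by (apply IHn; intros; apply H0; lia).
 assert (0 <= prodR n f). { clear IHn H1. induction n; simpl. lra. apply Rmult_le_pos. apply IHn; intros; apply H0; lia. apply H0; lia. }
 destruct (H0 n (Nat.lt_succ_diag_r n)). apply Rmult_le_compat; auto. Qed.

Lemma prodR_nonneg : forall n f, (forall i, (i < n)%nat -> 0 <= f i) -> 0 <= prodR n f.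
Proof. induction n; intros; simpl. lra. apply Rmult_le_pos. apply IHn; intros; apply H0; lia. apply H0; lia. Qed.

Lemma prodR_inv : forall n f, (forall i, (i < n)%nat -> f i <> 0) -> prodR n (fun i => / f i) = / prodR n f.
Proof. induction n; intros; simpl. field. rewrite IHn by (intros; apply H0; lia). field. split. apply H0; lia.
 clear IHn. induction n; simpl. lra. apply Rmult_integral_contrapositive; split. apply IHn; intros; apply H0; lia. apply H0; lia. Qed.

Lemma prodR_pos_each : forall n f, (forall i, (i < n)%nat -> 0 <= f i) -> 0 < prodR n f -> forall i, (i < n)%nat -> 0 < f i.
Proof. induction n; intros f Hf Hp i Hi. lia. simpl in Hp.
 assert (0 <= prodR n f) by (apply prodR_nonneg; intros; apply Hf; lia). assert (0 <= f n) by (apply Hf; lia).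
 assert (0 < prodR n f /\ 0 < f n).
 { split. destruct (Req_dec (prodR n f) 0) as [E|E]. rewrite E in Hp; lra. lra.
   destruct (Req_dec (f n) 0) as [E|E]. rewrite E in Hp; lra. lra. }
 destruct H2. destruct (Nat.eq_dec i n). subst; auto. apply (IHn f (fun i0 Hi0 => Hf i0 ltac:(lia)) H2 i). lia. Qed.

Lemma prodR_one_at : forall n i0 c, (i0 < n)%nat -> prodR n (fun i => if Nat.eq_dec i i0 then c else 1) = c.
Proof. induction n; intros. lia. simpl. destruct (Nat.eq_dec n i0).
 subst i0. rewrite (prodR_ext _ _ (fun _ => 1)). rewrite prodR_const, pow1. ring. intros i Hi; destruct (Nat.eq_dec i n); [lia|auto].
 rewrite IHn by lia. ring. Qed.

Lemma val1_app : forall l1 l2 y, val1 (l1 ++ l2) y = val1 l1 y + val1 l2 y.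
Proof. induction l1; intros; simpl. lra. unfold val1 in *. simpl. rewrite IHl1. lra. Qed.
Lemma int1_app : forall l1 l2, int1 (l1 ++ l2) = int1 l1 + int1 l2.
Proof. induction l1; intros; simpl. lra. unfold int1 in *. simpl. rewrite IHl1. lra. Qed.

Lemma val1_seq : forall (f : nat -> seg) n y, val1 (map f (seq 0 n)) y = sumN n (fun i => tv (f i) y).
Proof. intros f n y. induction n. reflexivity. rewrite seq_S, map_app, val1_app, IHn. simpl. unfold val1; simpl. lra. Qed.

Lemma int1_seq : forall (f : nat -> seg) n, int1 (map f (seq 0 n)) = sumN n (fun i => fst (f i) * (snd (snd (f i)) - fst (snd (f i)))).
Proof. intros f n. induction n. reflexivity. rewrite seq_S, map_app, int1_app, IHn. simpl. unfold int1; simpl. lra. Qed.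

Lemma step_val_flatseq : forall m (F : nat -> step_fun) n x, step_val m (flat_map F (seq 0 n)) x = sumN n (fun r => step_val m (F r) x).
Proof. intros. induction n. reflexivity. rewrite seq_S, flat_map_app, step_val_app, IHn. simpl. rewrite app_nil_r. reflexivity. Qed.

Lemma step_int_flatseq : forall m (F : nat -> step_fun) n, step_int m (flat_map F (seq 0 n)) = sumN n (fun r => step_int m (F r)).
Proof. intros. induction n. reflexivity. rewrite seq_S, flat_map_app, step_int_app, IHn. simpl. rewrite app_nil_r. reflexivity. Qed.

Lemma val1_nonneg : forall L y, (forall p, In p L -> 0 <= fst p) -> 0 <= val1 L y.
Proof. induction L; intros; simpl. lra. apply Rplus_le_le_0_compat. unfold tv. destruct (Rle_dec _ _); [destruct (Rle_dec _ _)|]; try lra. apply H0; left; auto.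
 apply IHL; intros; apply H0; right; auto. Qed.

Lemma val1_ge_term : forall L y p, In p L -> (forall p, In p L -> 0 <= fst p) -> tv p y <= val1 L y.
Proof. induction L; intros y p Hp Hn. destruct Hp. simpl. destruct Hp as [E|Hp].
 subst. assert (0 <= val1 L y) by (apply val1_nonneg; intros; apply Hn; right; auto). lra.
 assert (0 <= tv a y). { unfold tv. destruct (Rle_dec _ _); [destruct (Rle_dec _ _)|]; try lra. apply Hn; left; auto. }
 assert (tv p y <= val1 L y) by (apply IHL; auto; intros; apply Hn; right; auto). lra. Qed.

Lemma val1_pos_in : forall L y, 0 < val1 L y -> exists p, In p L /\ fst (snd p) <= y <= snd (snd p).
Proof. induction L; intros y Hv; simpl in Hv. lra. unfold tv in Hv. destruct (Rle_dec (fst (snd a)) y); [destruct (Rle_dec y (snd (snd a)))|].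
 - exists a; split; [left|]; auto.
 - destruct (IHL y ltac:(lra)) as [p [Hp Hy]]. exists p; split; [right|]; auto.
 - destruct (IHL y ltac:(lra)) as [p [Hp Hy]]. exists p; split; [right|]; auto. Qed.

Lemma find_cell_nat : forall N z, (2 <= N)%nat -> 1 <= z <= INR N -> exists b, (2 <= b <= N)%nat /\ INR b - 1 <= z <= INR b.
Proof. induction N; intros z HN Hz. lia. destruct (Nat.eq_dec N 1). subst. exists 2%nat. split. lia. simpl in *. lra.
 destruct (Rle_dec z (INR N)). destruct (IHN z ltac:(lia) ltac:(lra)) as [b [Hb Hb']]. exists b; split; auto; lia.
 exists (S N). split. lia. rewrite S_INR in *. lra. Qed.

Lemma find_cell : forall N y, (2 <= N)%nat -> / INR N < y <= 1 ->
  exists b, (2 <= b <= N)%nat /\ (INR b - 1) / INR N <= y <= INR b / INR N.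
Proof. intros N y HN Hy. assert (0 < INR N) by (apply lt_0_INR; lia).
 destruct (find_cell_nat N (INR N * y) HN) as [b [Hb Hb']].
 split. apply Rmult_le_reg_l with (/ INR N). apply Rinv_0_lt_compat; auto. rewrite <- Rmult_assoc, Rinv_l, Rmult_1_r, Rmult_1_l by lra. lra.
 rewrite <- (Rmult_1_r (INR N)) at 2. apply Rmult_le_compat_l; lra.
 exists b. split; auto. split; unfold Rdiv; apply Rmult_le_reg_l with (INR N); auto; field_simplify; lra. Qed.

Definition L0u (N K r : nat) : list seg := (INR N * w0 K r, ((INR K - INR r) / INR N, (INR K - INR r + 1) / INR N)) :: nil.
Definition bU (r i : nat) : nat := (r - 2 + 1 + i)%nat.
Definition psiU (N K r : nat) : list seg :=
  map (fun i => (INR N / INR (bU r i), (INR (bU r i) / INR N, (INR (bU r i) + 1) / INR N))) (seq 0 (K - (r - 2))).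
Definition LU (N K r : nat) : nat -> list seg := fun i => match i with O => L0u N K r | _ => psiU N K r end.
Definition Lay (N : nat) (C : R) (i0 : nat) : nat -> list seg :=
  fun i => if Nat.eq_dec i i0 then (C, (0, / INR N)) :: nil else (1, (0, 1)) :: nil.
Definition Tup (m N K : nat) (C : R) : step_fun :=
  flat_map (fun r => prodlist (LU N K r) m) (seq 0 K) ++ flat_map (fun i0 => prodlist (Lay N C i0) m) (seq 0 m).

Lemma int1_L0u : forall N K r, (0 < N)%nat -> int1 (L0u N K r) = w0 K r.
Proof. intros. unfold L0u, int1; simpl. assert (0 < INR N) by (apply lt_0_INR; lia). field. lra. Qed.

Lemma int1_psiU : forall N K r, (0 < N)%nat -> (r - 2 <= K)%nat -> int1 (psiU N K r) = H K - H (r - 2).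
Proof. intros. unfold psiU. rewrite int1_seq. simpl. assert (0 < INR N) by (apply lt_0_INR; lia).
 replace K with ((r - 2) + (K - (r - 2)))%nat at 2 by lia. unfold H at 1. rewrite sumN_split. fold (H (r - 2)).
 match goal with |- ?a = ?b + ?c - ?b => enough (a = c) by lra end.
 apply sumN_ext. intros i Hi. unfold bU. replace (r - 2 + 1 + i)%nat with (S (r - 2 + i)) by lia.
 assert (0 < INR (S (r - 2 + i))) by apply INRS_pos. field. lra. Qed.

Lemma Tup_int : forall k N K C, N = S K -> step_int (S k) (Tup (S k) N K C) =
  sumN K (fun r => w0 K r * (H K - H (r - 2)) ^ k) + INR (S k) * (C / INR N).
Proof. intros k N K C HN. unfold Tup. rewrite step_int_app, !step_int_flatseq. f_equal.
 - apply sumN_ext. intros r Hr. rewrite step_int_pl, prodR_S0. simpl LU. rewrite int1_L0u by lia.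
   change (prodR k (fun i => int1 (LU N K r (S i)))) with (prodR k (fun _ => int1 (psiU N K r))). rewrite prodR_const, int1_psiU by lia. reflexivity.
 - rewrite (sumN_ext _ _ (fun _ => C / INR N)). apply sumN_const.
   intros i0 Hi0. rewrite step_int_pl. rewrite (prodR_ext _ _ (fun i => if Nat.eq_dec i i0 then C / INR N else 1)).
   apply prodR_one_at; auto. intros i Hi. unfold Lay. destruct (Nat.eq_dec i i0); unfold int1; simpl; unfold Rdiv; ring. Qed.

Lemma Tup_ok : forall m N K C, (0 < N)%nat -> boxes_ok m (Tup m N K C).
Proof. intros m N K C HN q Hq. assert (0 < INR N) by (apply lt_0_INR; lia). unfold Tup in Hq. apply in_app_or in Hq. destruct Hq as [Hq|Hq];
 apply in_flat_map in Hq; destruct Hq as [r [_ Hq]]; revert q Hq; apply pl_ok; intros i p Hi Hp.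
 - destruct i; simpl in Hp. destruct Hp as [E|[]]; subst; cbn [fst snd]. unfold Rdiv. apply Rmult_le_compat_r. left; apply Rinv_0_lt_compat; lra. lra.
   unfold psiU in Hp. apply in_map_iff in Hp. destruct Hp as [j [E _]]. subst. simpl. unfold Rdiv. apply Rmult_le_compat_r. left; apply Rinv_0_lt_compat; lra. lra.
 - unfold Lay in Hp. destruct (Nat.eq_dec i r); destruct Hp as [E|[]]; subst; cbn [fst snd]. left; apply Rinv_0_lt_compat; lra. lra. Qed.

Lemma sumN_ge_term : forall n f i0, (forall i, (i < n)%nat -> 0 <= f i) -> (i0 < n)%nat -> f i0 <= sumN n f.
Proof. induction n; intros f i0 Hf Hi. lia. simpl. destruct (Nat.eq_dec i0 n). subst.
 assert (0 <= sumN n f) by (apply sumN_nonneg; intros; apply Hf; lia). lra.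
 assert (f i0 <= sumN n f) by (apply (IHn f i0 (fun i Hi0 => Hf i ltac:(lia))); lia). assert (0 <= f n) by (apply Hf; lia). lra. Qed.

Lemma prodR_pos : forall n f, (forall i, (i < n)%nat -> 0 < f i) -> 0 < prodR n f.
Proof. induction n; intros; simpl. lra. apply Rmult_lt_0_compat. apply IHn; intros; apply H0; lia. apply H0; lia. Qed.

Definition sumc (s : step_fun) : R := fold_right (fun q acc => fst q + acc) 0 s.

Lemma step_val_le_sumc : forall m s x, (forall q, In q s -> 0 <= fst q) -> step_val m s x <= sumc s.
Proof. induction s; intros; simpl. unfold step_val; simpl; lra. unfold step_val in *; simpl.
 assert (IH := IHs x (fun q Hq => H0 q (or_intror Hq))). assert (0 <= fst a) by (apply H0; left; auto).
 destruct (in_boxb m (snd a) x); lra. Qed.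

Lemma step_val_nonneg : forall m s x, (forall q, In q s -> 0 <= fst q) -> 0 <= step_val m s x.
Proof. induction s; intros; simpl. unfold step_val; simpl; lra. unfold step_val in *; simpl.
 assert (IH := IHs x (fun q Hq => H0 q (or_intror Hq))). assert (0 <= fst a) by (apply H0; left; auto).
 destruct (in_boxb m (snd a) x); lra. Qed.

Lemma tv_nonneg : forall p y, 0 <= fst p -> 0 <= tv p y.
Proof. intros. unfold tv. destruct (Rle_dec _ _); [destruct (Rle_dec _ _)|]; lra. Qed.

Lemma Tup_dominates : forall k' K s x, let m := S (S k') in let N := S K in (1 <= K)%nat ->
  step_valid m s -> below_integrand m s ->
  step_val m s x <= step_val m (Tup m N K (sumc s)) x.
Proof. intros k' K s x m N HK Hval Hbel. unfold Tup. rewrite step_val_app, !step_val_flatseq.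
 assert (HN : (2 <= N)%nat) by (unfold N; lia). assert (HNp : 0 < INR N) by (apply lt_0_INR; lia).
 assert (Hc : forall q, In q s -> 0 <= fst q) by (intros [c B] Hq; apply (Hval c B Hq)).
 assert (HC : 0 <= sumc s) by (apply Rle_trans with (step_val m s x); [apply step_val_nonneg|apply step_val_le_sumc]; auto).
 assert (Hpart1 : forall r, (r < K)%nat -> 0 <= prodR m (fun i => val1 (LU N K r i) (x i))).
 { intros r Hr. apply prodR_nonneg. intros i Hi. apply val1_nonneg. intros p Hp. destruct i; [change (LU N K r 0) with (L0u N K r) in Hp; unfold L0u in Hp | change (LU N K r (S i)) with (psiU N K r) in Hp].
   destruct Hp as [E|[]]; subst; cbn [fst snd]. apply Rmult_le_pos. lra. left; apply w0_pos; auto.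
   unfold psiU in Hp. apply in_map_iff in Hp. destruct Hp as [j [E _]]. subst; cbn [fst snd]. unfold Rdiv.
   apply Rmult_le_pos. lra. left; apply Rinv_0_lt_compat. unfold bU. apply lt_0_INR; lia. }
 assert (Hpart2 : forall i0, (i0 < m)%nat -> 0 <= prodR m (fun i => val1 (Lay N (sumc s) i0 i) (x i))).
 { intros i0 Hi0. apply prodR_nonneg. intros i Hi. apply val1_nonneg. intros p Hp. unfold Lay in Hp.
   destruct (Nat.eq_dec i i0); destruct Hp as [E|[]]; subst; simpl; lra. }
 assert (S1 : 0 <= sumN K (fun r => step_val m (prodlist (LU N K r) m) x)).
 { apply sumN_nonneg. intros. rewrite step_val_pl. auto. }
 assert (S2 : 0 <= sumN m (fun i0 => step_val m (prodlist (Lay N (sumc s) i0) m) x)).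
 { apply sumN_nonneg. intros. rewrite step_val_pl. auto. }
 destruct (Hbel x) as [Hin Hout].
 destruct (Classical_Prop.classic (In_V m x)) as [HV|HV]; [|assert (step_val m s x <= 0) by auto; lra].
 destruct HV as [H01 Hsum].
 destruct (Classical_Prop.classic (exists i0, (i0 < m)%nat /\ x i0 <= / INR N)) as [[i0 [Hi0 Hx0]]|Hno].
 -
   assert (step_val m (prodlist (Lay N (sumc s) i0) m) x = sumc s).
   { rewrite step_val_pl. rewrite (prodR_ext _ _ (fun i => if Nat.eq_dec i i0 then sumc s else 1)). apply prodR_one_at; auto.
     intros i Hi. unfold Lay. destruct (H01 i Hi). destruct (Nat.eq_dec i i0); unfold val1, tv; cbn [fst snd fold_right].
     subst. destruct (Rle_dec 0 (x i0)); [|lra]. destruct (Rle_dec (x i0) (/ INR N)); [|lra]. ring.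
     destruct (Rle_dec 0 (x i)); [|lra]. destruct (Rle_dec (x i) 1); [|lra]. ring. }
   assert (step_val m (prodlist (Lay N (sumc s) i0) m) x <= sumN m (fun i0 => step_val m (prodlist (Lay N (sumc s) i0) m) x)).
   { apply (sumN_ge_term m (fun i0 => step_val m (prodlist (Lay N (sumc s) i0) m) x) i0); auto.
     intros; rewrite step_val_pl; apply Hpart2; auto.  }
   assert (step_val m s x <= sumc s) by (apply step_val_le_sumc; auto). lra.
 - assert (Hbig : forall i, (i < m)%nat -> / INR N < x i).
   { intros i Hi. destruct (Rlt_dec (/ INR N) (x i)); auto. exfalso; apply Hno. exists i; split; auto; lra. }
   destruct (find_cell N (x O) HN) as [a [Ha Hxa]]. split. apply Hbig; unfold m; lia. apply H01; unfold m; lia.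
   set (r := (N - a)%nat).
   assert (Hr : (r < K)%nat) by (unfold r, N in *; lia).
   assert (Hxpos : forall i, (i < m)%nat -> 0 < x i) by (intros; apply Rlt_trans with (/ INR N); [apply Rinv_0_lt_compat; auto|apply Hbig; auto]).
   assert (Hpos : 0 < prodR m x) by (apply prodR_pos; auto).
   assert (Hs : step_val m s x <= / prodR m x).
   { assert (Hh := Hin (conj H01 Hsum) Hpos). apply Rmult_le_reg_r with (prodR m x); auto. rewrite Rinv_l; lra. }
   assert (Hdom : / prodR m x <= prodR m (fun i => val1 (LU N K r i) (x i))).
   { rewrite <- prodR_inv by (intros i Hi; specialize (Hxpos i Hi); lra). apply prodR_le. intros i Hi.
     split. left; apply Rinv_0_lt_compat; auto. destruct i as [|j].
     - change (LU N K r 0) with (L0u N K r). unfold L0u, val1, tv; cbn [fst snd fold_right].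
       assert (E1 : INR K - INR r = INR a - 1).
       { unfold r. rewrite minus_INR by lia. unfold N; rewrite S_INR. lra. }
       rewrite E1. replace (INR a - 1 + 1) with (INR a) by ring.
       destruct (Rle_dec ((INR a - 1) / INR N) (x O)); [|lra].
       destruct (Rle_dec (x O) (INR a / INR N)); [|lra].
       rewrite Rplus_0_r. unfold w0. rewrite E1.
       assert (2 <= INR a) by (apply (le_INR 2); lia).
       replace (INR N * / (INR a - 1)) with (/ ((INR a - 1) / INR N)) by (field; lra).
       apply Rinv_le_contravar. apply Rdiv_lt_0_compat; lra. auto.
     - change (LU N K r (S j)) with (psiU N K r). destruct (find_cell N (x (S j)) HN) as [b [Hb Hxb]]. split. apply Hbig; auto. apply H01; auto.
       assert (Hab : (N <= a + b)%nat).
       { assert (x O + x (S j) >= 1) by (apply Hsum; lia).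
         assert (INR N <= INR a + INR b).
         { apply Rmult_le_reg_r with (/ INR N). apply Rinv_0_lt_compat; auto. rewrite Rinv_r by lra.
           unfold Rdiv in Hxa, Hxb. lra. }
         rewrite <- plus_INR in H1. apply INR_le in H1. auto. }
       set (i := (b - 1 - (r - 2) - 1)%nat).
       assert (Hi_lt : (i < K - (r - 2))%nat) by (unfold i, r, N in *; lia).
       assert (Hbi : bU r i = (b - 1)%nat) by (unfold bU, i, r in *; lia).
       apply Rle_trans with (tv (INR N / INR (bU r i), (INR (bU r i) / INR N, (INR (bU r i) + 1) / INR N)) (x (S j))).
       + unfold tv; cbn [fst snd]. rewrite Hbi. rewrite minus_INR by lia. change (INR 1) with 1.
         replace (INR b - 1 + 1) with (INR b) by ring.
         destruct (Rle_dec ((INR b - 1) / INR N) (x (S j))); [|lra].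
         destruct (Rle_dec (x (S j)) (INR b / INR N)); [|lra].
         assert (2 <= INR b) by (apply (le_INR 2); lia).
         replace (INR N / (INR b - 1)) with (/ ((INR b - 1) / INR N)) by (field; lra).
         apply Rinv_le_contravar. apply Rdiv_lt_0_compat; lra. auto.
       + apply val1_ge_term. unfold psiU. apply in_map_iff. exists i. split; auto. apply in_seq. lia.
         intros p Hp. unfold psiU in Hp. apply in_map_iff in Hp. destruct Hp as [j' [E _]]. subst; cbn [fst snd]. unfold Rdiv.
         apply Rmult_le_pos. lra. left; apply Rinv_0_lt_compat. unfold bU. apply lt_0_INR; lia. }
   assert (prodR m (fun i => val1 (LU N K r i) (x i)) <= sumN K (fun r => step_val m (prodlist (LU N K r) m) x)).
   { rewrite <- step_val_pl. apply (sumN_ge_term K (fun r => step_val m (prodlist (LU N K r) m) x) r); auto.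
     intros; rewrite step_val_pl; apply Hpart1; auto.  }
   lra. Qed.

Definition L0l (N : nat) (eta : R) (r : nat) : list seg :=
  (INR N * w0 N r, ((INR (N - r) - 1) / INR N + eta, INR (N - r) / INR N)) :: nil.
Definition bL (r i : nat) : nat := (r + 2 + i)%nat.
Definition psiL (N : nat) (eta : R) (r : nat) : list seg :=
  map (fun i => (INR N / INR (bL r i), ((INR (bL r i) - 1) / INR N + eta, INR (bL r i) / INR N))) (seq 0 (N - S r)).
Definition LL (N : nat) (eta : R) (r : nat) : nat -> list seg := fun i => match i with O => L0l N eta r | _ => psiL N eta r end.
Definition Slow (m N : nat) (eta : R) : step_fun := flat_map (fun r => prodlist (LL N eta r) m) (seq 0 N).

Lemma int1_L0l : forall N eta r, (r < N)%nat -> int1 (L0l N eta r) = (1 - INR N * eta) * w0 N r.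
Proof. intros. unfold L0l, int1; cbn [fst snd fold_right]. assert (0 < INR N) by (apply lt_0_INR; lia). field. lra. Qed.

Lemma int1_psiL : forall N eta r, (r < N)%nat -> int1 (psiL N eta r) = (1 - INR N * eta) * (H N - H (S r)).
Proof. intros. unfold psiL. rewrite int1_seq. cbn [fst snd]. assert (0 < INR N) by (apply lt_0_INR; lia).
 replace N with (S r + (N - S r))%nat at 3 by lia. unfold H at 1. rewrite sumN_split. fold (H (S r)).
 replace (H (S r) + sumN (N - S r) (fun i => / INR (S (S r + i))) - H (S r)) with (sumN (N - S r) (fun i => / INR (S (S r + i)))) by ring.
 rewrite <- sumN_scal. apply sumN_ext. intros i Hi. unfold bL. replace (r + 2 + i)%nat with (S (S r + i)) by lia.
 assert (0 < INR (S (S r + i))) by apply INRS_pos. field. lra. Qed.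

Lemma Slow_int : forall k N eta, step_int (S k) (Slow (S k) N eta) =
  (1 - INR N * eta) ^ (S k) * sumN N (fun r => w0 N r * PP N k (S r)).
Proof. intros. unfold Slow. rewrite step_int_flatseq. rewrite <- sumN_scal. apply sumN_ext. intros r Hr.
 rewrite step_int_pl, prodR_S0. change (int1 (LL N eta r 0)) with (int1 (L0l N eta r)). rewrite int1_L0l by auto.
 change (prodR k (fun i => int1 (LL N eta r (S i)))) with (prodR k (fun _ => int1 (psiL N eta r))).
 rewrite prodR_const, int1_psiL by auto. unfold PP. rewrite Rpow_mult_distr. simpl pow. ring. Qed.

Lemma disj : forall N eta (c c' : nat) y, 0 < INR N -> 0 < eta ->
  (INR c - 1) / INR N + eta <= y <= INR c / INR N -> (INR c' - 1) / INR N + eta <= y <= INR c' / INR N -> c = c'.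
Proof. intros N eta c c' y HN He H1 H2. destruct (lt_eq_lt_dec c c') as [[Hl|E]|Hl]; auto; exfalso.
 - assert (INR c + 1 <= INR c') by (rewrite <- S_INR; apply le_INR; lia).
   assert (INR c / INR N <= (INR c' - 1) / INR N) by (unfold Rdiv; apply Rmult_le_compat_r; [left; apply Rinv_0_lt_compat; auto|lra]). lra.
 - assert (INR c' + 1 <= INR c) by (rewrite <- S_INR; apply le_INR; lia).
   assert (INR c' / INR N <= (INR c - 1) / INR N) by (unfold Rdiv; apply Rmult_le_compat_r; [left; apply Rinv_0_lt_compat; auto|lra]). lra. Qed.

Lemma sum_atmost1 : forall n f, (forall i, (i < n)%nat -> 0 <= f i <= 1) ->
  (forall i j, (i < n)%nat -> (j < n)%nat -> f i <> 0 -> f j <> 0 -> i = j) -> sumN n f <= 1.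
Proof. induction n; intros f Hf Hu; simpl. lra. destruct (Req_dec (f n) 0) as [E|E].
 rewrite E. rewrite Rplus_0_r. apply IHn. intros; apply Hf; lia. intros; apply Hu; auto; lia.
 rewrite (sumN_ext _ _ (fun _ => 0)). rewrite sumN_const. assert (f n <= 1) by (apply Hf; lia). lra.
 intros i Hi. destruct (Req_dec (f i) 0); auto. exfalso. assert (i = n) by (apply Hu; auto; lia). lia. Qed.

Lemma tv_nz : forall p y, tv p y <> 0 -> fst (snd p) <= y <= snd (snd p).
Proof. intros p y H. unfold tv in H. destruct (Rle_dec _ _); [destruct (Rle_dec _ _)|]; try lra; auto. Qed.

Lemma sumN_pos_ex : forall n f, 0 < sumN n f -> exists i, (i < n)%nat /\ 0 < f i.
Proof. induction n; intros f H; simpl in H. lra. destruct (Rlt_dec 0 (f n)). exists n; split; auto.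
 destruct (IHn f ltac:(lra)) as [i [Hi Hfi]]. exists i; split; auto. Qed.

Lemma Slow_valid : forall k N eta, (0 < N)%nat -> 0 < eta < / INR N -> step_valid (S k) (Slow (S k) N eta).
Proof. intros k N eta HN He c B Hq. assert (HNp : 0 < INR N) by (apply lt_0_INR; lia).
 assert (Heta : eta <= 1 / INR N) by (unfold Rdiv; lra).
 unfold Slow in Hq. apply in_flat_map in Hq. destruct Hq as [r [Hr Hq]]. apply in_seq in Hr.
 split.
 - apply (pl_nonneg (LL N eta r) (S k)) with (q := (c,B)); auto. intros i p Hi Hp. destruct i.
   + change (LL N eta r 0) with (L0l N eta r) in Hp. destruct Hp as [E|[]]; subst; cbn [fst].
     apply Rmult_le_pos; [lra| left; apply w0_pos; lia].
   + change (LL N eta r (S i)) with (psiL N eta r) in Hp. unfold psiL in Hp. apply in_map_iff in Hp.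
     destruct Hp as [j [E _]]; subst; cbn [fst]. unfold Rdiv. apply Rmult_le_pos; [lra|]. left; apply Rinv_0_lt_compat, lt_0_INR. unfold bL; lia.
 - apply (pl_ok (LL N eta r) (S k)) with (q := (c,B)); auto. intros i p Hi Hp. destruct i.
   + change (LL N eta r 0) with (L0l N eta r) in Hp. destruct Hp as [E|[]]; subst; cbn [fst snd].
     replace (INR (N - r) / INR N) with ((INR (N - r) - 1) / INR N + 1 / INR N) by (field; lra). lra.
   + change (LL N eta r (S i)) with (psiL N eta r) in Hp. unfold psiL in Hp. apply in_map_iff in Hp.
     destruct Hp as [j [E _]]; subst; cbn [fst snd].
     replace (INR (bL r j) / INR N) with ((INR (bL r j) - 1) / INR N + 1 / INR N) by (field; lra). lra. Qed.

Lemma Slow_below : forall k' N eta, let m := S (S k') in (0 < N)%nat -> 0 < eta < / INR N ->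
  below_integrand m (Slow m N eta).
Proof. intros k' N eta m HN He x. assert (HNp : 0 < INR N) by (apply lt_0_INR; lia).
 assert (Hv := Slow_valid (S k') N eta HN He). fold m in Hv.
 assert (Hcoef : forall r i p, (r < N)%nat -> In p (LL N eta r i) -> 0 <= fst p).
 { intros r i p Hr Hp. destruct i.
   + change (LL N eta r 0) with (L0l N eta r) in Hp. destruct Hp as [E|[]]; subst; cbn [fst].
     apply Rmult_le_pos; [lra| left; apply w0_pos; lia].
   + change (LL N eta r (S i)) with (psiL N eta r) in Hp. unfold psiL in Hp. apply in_map_iff in Hp.
     destruct Hp as [j [E _]]; subst; cbn [fst]. unfold Rdiv. apply Rmult_le_pos; [lra|]. left; apply Rinv_0_lt_compat, lt_0_INR. unfold bL; lia. }
 unfold Slow. rewrite step_val_flatseq.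
 assert (HF : forall r, step_val m (prodlist (LL N eta r) m) x = prodR m (fun i => val1 (LL N eta r i) (x i))) by (intros; apply step_val_pl).
 split.
 - intros [H01 Hsum] Hpos. rewrite <- sumN_scalr.
   apply sum_atmost1.
   + intros r Hr. rewrite HF. rewrite <- prodR_mult. split.
     apply prodR_nonneg. intros i Hi. apply Rmult_le_pos. apply val1_nonneg. intros; eapply Hcoef; eauto. apply H01; auto.
     rewrite <- (pow1 m), <- prodR_const. apply prodR_le. intros i Hi. split.
     apply Rmult_le_pos. apply val1_nonneg. intros; eapply Hcoef; eauto. apply H01; auto.
     destruct i.
     * change (LL N eta r 0) with (L0l N eta r). unfold L0l, val1, tv; cbn [fst snd fold_right].
       destruct (Rle_dec _ _); [destruct (Rle_dec _ _)|]; [|lra|lra]. rewrite Rplus_0_r.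
       unfold w0. rewrite minus_INR in * by lia.
       assert (INR r < INR N) by (apply lt_INR; lia).
       apply Rle_trans with (INR N * / (INR N - INR r) * ((INR N - INR r) / INR N)).
       apply Rmult_le_compat_l. apply Rmult_le_pos. lra. left; apply Rinv_0_lt_compat; lra. auto.
       right. field. lra.
     * change (LL N eta r (S i)) with (psiL N eta r). unfold psiL. rewrite val1_seq. rewrite <- sumN_scalr.
       apply sum_atmost1.
       -- intros j Hj. cbn [fst snd]. unfold tv; cbn [fst snd]. destruct (Rle_dec _ _); [destruct (Rle_dec _ _)|]; try (split; [lra|lra]).
          assert (0 < INR (bL r j)) by (apply lt_0_INR; unfold bL; lia). assert (0 <= x (S i)) by (apply H01; auto).
          split. apply Rmult_le_pos; [|lra]. unfold Rdiv; apply Rmult_le_pos; [lra|left; apply Rinv_0_lt_compat; lra].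
          apply Rle_trans with (INR N / INR (bL r j) * (INR (bL r j) / INR N)). apply Rmult_le_compat_l. unfold Rdiv; apply Rmult_le_pos; [lra|left; apply Rinv_0_lt_compat; lra]. auto.
          right; field; lra.
       -- intros j1 j2 Hj1 Hj2 Hn1 Hn2. cbn [fst snd] in *.
          assert (T1 := tv_nz _ _ (fun E => Hn1 (Rmult_eq_0_compat_r _ _ E))).
          assert (T2 := tv_nz _ _ (fun E => Hn2 (Rmult_eq_0_compat_r _ _ E))). cbn [fst snd] in T1, T2.
          assert (E := disj N eta _ _ _ HNp (proj1 He) T1 T2). unfold bL in E. lia.
   + intros r1 r2 Hr1 Hr2 Hn1 Hn2. rewrite HF in Hn1, Hn2. unfold m in Hn1, Hn2. rewrite prodR_S0 in Hn1, Hn2.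
     assert (A1 : val1 (LL N eta r1 0) (x 0%nat) <> 0) by (intro E; apply Hn1; rewrite E; ring).
     assert (A2 : val1 (LL N eta r2 0) (x 0%nat) <> 0) by (intro E; apply Hn2; rewrite E; ring).
     change (LL N eta r1 0) with (L0l N eta r1) in A1. change (LL N eta r2 0) with (L0l N eta r2) in A2.
     unfold L0l, val1 in A1, A2. cbn [fold_right] in A1, A2. rewrite Rplus_0_r in A1, A2.
     apply tv_nz in A1. apply tv_nz in A2. cbn [fst snd] in A1, A2.
     assert (E := disj N eta _ _ _ HNp (proj1 He) A1 A2). lia.
 - intros HV. destruct (Rle_dec (sumN N (fun r => step_val m (prodlist (LL N eta r) m) x)) 0) as [|Hgt]; auto.
   exfalso. apply HV. apply Rnot_le_lt in Hgt. destruct (sumN_pos_ex _ _ Hgt) as [r [Hr Hpr]].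
   rewrite HF in Hpr.
   assert (Hall := prodR_pos_each m _ (fun i Hi => val1_nonneg _ _ (fun p Hp => Hcoef r i p Hr Hp)) Hpr).
   assert (HN1 : INR (N - r) <= INR N) by (apply le_INR; lia).
   assert (HN2 : 1 <= INR (N - r)) by (apply (le_INR 1); lia).
   assert (Hx0 : (INR (N - r) - 1) / INR N + eta <= x 0%nat <= INR (N - r) / INR N).
   { assert (A := Hall O ltac:(unfold m; lia)). change (LL N eta r 0) with (L0l N eta r) in A.
     destruct (val1_pos_in _ _ A) as [p [Hp Hy]]. destruct Hp as [E|[]]. subst p. cbn [fst snd] in Hy. auto. }
   assert (Hxj : forall j, (1 <= j < m)%nat -> exists b, (r + 2 <= b <= N)%nat /\ (INR b - 1) / INR N + eta <= x j <= INR b / INR N).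
   { intros j Hj. destruct j as [|j]; [lia|]. assert (A := Hall (S j) ltac:(lia)). change (LL N eta r (S j)) with (psiL N eta r) in A.
     destruct (val1_pos_in _ _ A) as [p [Hp Hy]]. unfold psiL in Hp. apply in_map_iff in Hp. destruct Hp as [i [E Hi]]. subst p.
     apply in_seq in Hi. exists (bL r i). split. unfold bL; lia. cbn [fst snd] in Hy. auto. }
   assert (Hdiv : forall a b, a <= b -> a / INR N <= b / INR N) by (intros; unfold Rdiv; apply Rmult_le_compat_r; [left; apply Rinv_0_lt_compat; auto|auto]).
   assert (H1N : INR N / INR N = 1) by (field; lra). assert (H0N : 0 / INR N = 0) by (field; lra).
   split.
   + intros i Hi. destruct i.
     * split. apply Rle_trans with ((INR (N - r) - 1) / INR N + eta); [|lra]. assert (0 <= (INR (N - r) - 1) / INR N) by (rewrite <- H0N; apply Hdiv; lra). lra.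
       apply Rle_trans with (INR (N - r) / INR N); [lra|]. rewrite <- H1N. apply Hdiv; lra.
     * destruct (Hxj (S i) ltac:(lia)) as [b [Hb Hy]]. assert (2 <= INR b) by (apply (le_INR 2); lia). assert (INR b <= INR N) by (apply le_INR; lia).
       split. apply Rle_trans with ((INR b - 1) / INR N + eta); [|lra]. assert (0 <= (INR b - 1) / INR N) by (rewrite <- H0N; apply Hdiv; lra). lra.
       apply Rle_trans with (INR b / INR N); [lra|]. rewrite <- H1N. apply Hdiv; lra.
   + intros j Hj. destruct (Hxj j Hj) as [b [Hb Hy]].
     assert (INR (r + 2) <= INR b) by (apply le_INR; lia). rewrite plus_INR in H0. rewrite minus_INR in Hx0 by lia.
     change (INR 2) with 2 in H0.
     assert ((INR N - INR r - 1) / INR N + (INR b - 1) / INR N >= 1).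
     { replace ((INR N - INR r - 1) / INR N + (INR b - 1) / INR N) with ((INR N - INR r - 1 + (INR b - 1)) / INR N) by (field; lra).
       apply Rle_ge. rewrite <- H1N. apply Hdiv. lra. }
     lra. Qed.

Lemma H_double : forall n, H (2 ^ S n) <= H (2 ^ n) + 1.
Proof. intros. replace (2 ^ S n)%nat with (2 ^ n + 2 ^ n)%nat by (simpl; lia). unfold H at 1. rewrite sumN_split. fold (H (2 ^ n)).
 assert (sumN (2 ^ n) (fun i => / INR (S (2 ^ n + i))) <= sumN (2 ^ n) (fun _ => / INR (2 ^ n))).
 { apply sumN_le. intros. apply Rinv_le_contravar. apply lt_0_INR. apply Nat.neq_0_lt_0, Nat.pow_nonzero; lia. apply le_INR; lia. }
 rewrite sumN_const in H0. assert (0 < INR (2 ^ n)) by (apply lt_0_INR, Nat.neq_0_lt_0, Nat.pow_nonzero; lia).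
 rewrite Rinv_r in H0 by lra. lra. Qed.

Lemma H_pow2 : forall n, H (2 ^ n) <= 1 + INR n.
Proof. induction n. simpl. unfold H; simpl. lra. assert (Hd := H_double n). rewrite S_INR. lra. Qed.

Lemma pow2_ge : forall t, INR t + 1 <= 2 ^ t.
Proof. induction t. simpl; lra. rewrite S_INR. simpl. assert (1 <= 2 ^ t) by (apply pow_R1_Rle; lra). lra. Qed.

Lemma err_small : forall p eps N1, 0 < eps -> exists N, (N1 <= N)%nat /\ (2 <= N)%nat /\ (1 + H N) ^ p / INR N < eps.
Proof. intros p eps N1 Heps. set (c := (INR p + 3) ^ p).
 assert (Hc : 0 < c) by (unfold c; apply pow_lt; assert (0 <= INR p) by apply pos_INR; lra).
 destruct (INR_unbounded (c / eps + INR N1 + 1)) as [t Ht].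
 exists (2 ^ (S p * t))%nat.
 assert (HN : INR (2 ^ (S p * t)) = (2 ^ t) ^ S p) by (rewrite pow_INR, <- pow_mult; simpl INR; f_equal; lia).
 assert (Ht1 : INR t + 1 <= 2 ^ t) by apply pow2_ge.
 assert (0 <= INR t) by apply pos_INR. assert (0 <= INR N1) by apply pos_INR.
 assert (Hbig : INR N1 + 2 <= INR (2 ^ (S p * t))).
 { rewrite HN. apply Rle_trans with (2 ^ t). 2:{ rewrite <- (pow_1 (2 ^ t)) at 1. apply Rle_pow. apply pow_R1_Rle; lra. lia. }
   assert (c / eps >= 0) by (unfold Rdiv; apply Rle_ge, Rmult_le_pos; [lra| left; apply Rinv_0_lt_compat; lra]). lra. }
 split; [|split].
 - apply INR_le. assert (INR N1 <= INR (2 ^ (S p * t))) by lra. auto.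
 - apply INR_le. simpl (INR 2). lra.
 - assert (HH : 1 + H (2 ^ (S p * t)) <= (INR p + 3) * (INR t + 1)).
   { assert (E := H_pow2 (S p * t)). rewrite mult_INR, S_INR in E. assert (0 <= INR p) by apply pos_INR. nra. }
   assert (0 <= H (2 ^ (S p * t))) by apply H_nonneg.
   assert (Hp1 : (1 + H (2 ^ (S p * t))) ^ p <= c * (INR t + 1) ^ p).
   { unfold c. rewrite <- Rpow_mult_distr. apply pow_incr. lra. }
   assert (HNge : (INR t + 1) ^ S p <= INR (2 ^ (S p * t))) by (rewrite HN; apply pow_incr; lra).
   assert (0 < (INR t + 1) ^ p) by (apply pow_lt; lra).
   apply Rle_lt_trans with (c * (INR t + 1) ^ p / (INR t + 1) ^ S p).
   + unfold Rdiv. apply Rmult_le_compat; try lra. apply pow_le; lra. left; apply Rinv_0_lt_compat. apply Rlt_le_trans with ((INR t + 1) ^ S p); auto. apply pow_lt; lra.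
     apply Rinv_le_contravar; auto. apply pow_lt; lra.
   + simpl pow. replace (c * (INR t + 1) ^ p / ((INR t + 1) * (INR t + 1) ^ p)) with (c / (INR t + 1)) by (field; lra).
     apply Rmult_lt_reg_r with (INR t + 1). lra. unfold Rdiv. rewrite Rmult_assoc, Rinv_l, Rmult_1_r by lra.
     assert (c < eps * (INR t + 1)).
     { assert (c / eps < INR t) by lra. apply Rmult_lt_reg_r with (/ eps). apply Rinv_0_lt_compat; lra.
       replace (eps * (INR t + 1) * / eps) with (INR t + 1) by (field; lra). unfold Rdiv in H3. lra. }
     lra. Qed.

Lemma sum_f_sumN : forall f n, sum_f_R0 f n = sumN (S n) f.
Proof. induction n; simpl. ring. rewrite IHn. simpl. ring. Qed.

Lemma Hp2_bound : forall n, sumN (S n) (fun i => / INR (S i) ^ 2) <= 2 - / INR (S n).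
Proof. induction n. simpl. lra.
 change (sumN (S (S n)) (fun i => / INR (S i) ^ 2)) with (sumN (S n) (fun i => / INR (S i) ^ 2) + / INR (S (S n)) ^ 2).
 rewrite (S_INR (S n)). assert (0 < INR (S n)) by apply INRS_pos. set (a := INR (S n)) in *.
 assert (/ (a + 1) ^ 2 <= / a - / (a + 1)).
 { replace (/ a - / (a + 1)) with (/ (a * (a + 1))) by (field; lra).
   apply Rinv_le_contravar. nra. simpl; nra. }
 lra. Qed.

Lemma zeta_conv : forall k', exists z, infinite_sum (zeta_term (S (S k'))) z /\
  (forall N, Hp (S (S k')) N <= z) /\
  (forall eps, 0 < eps -> exists N0, forall N, (N0 <= N)%nat -> z - eps < Hp (S (S k')) N).
Proof. intros k'. set (m := S (S k')). set (u := sum_f_R0 (zeta_term m)).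
 assert (Hterm : forall n, 0 <= zeta_term m n) by (intros; unfold zeta_term; left; apply Rinv_0_lt_compat, pow_lt, INRS_pos).
 assert (Hg : Un_growing u) by (intros n; unfold u; simpl; specialize (Hterm (S n)); lra).
 assert (Hub : has_ub u).
 { exists 2. intros y [n E]. subst y. unfold u. rewrite sum_f_sumN. apply Rle_trans with (2 - / INR (S n)).
   apply Rle_trans with (sumN (S n) (fun i => / INR (S i) ^ 2)); [|apply Hp2_bound].
   apply sumN_le. intros i Hi. unfold zeta_term. apply Rinv_le_contravar. apply pow_lt, INRS_pos.
   apply Rle_pow. apply (le_INR 1); lia. unfold m; lia.
   assert (0 < / INR (S n)) by (apply Rinv_0_lt_compat, INRS_pos). lra. }
 destruct (growing_cv u Hg Hub) as [z Hz]. exists z.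
 assert (HpU : forall N, Hp m (S N) = u N) by (intros; unfold u; rewrite sum_f_sumN; reflexivity).
 split; [|split].
 - intros eps Heps. destruct (Hz eps Heps) as [N0 HN0]. exists N0. intros n Hn. apply HN0; auto.
 - intros N. destruct N. unfold Hp; simpl. apply Rle_trans with (u O). unfold u; simpl; apply Hterm. apply growing_ineq; auto.
   rewrite HpU. apply growing_ineq; auto.
 - intros eps Heps. destruct (Hz eps Heps) as [N0 HN0]. exists (S N0). intros N HN. destruct N; [lia|].
   rewrite HpU. specialize (HN0 N ltac:(lia)). unfold Rdist in HN0. apply Rabs_def2 in HN0. lra. Qed.

Lemma bernoulli : forall n x, 0 <= x <= 1 -> 1 - INR n * x <= (1 - x) ^ n.
Proof. induction n; intros x Hx. simpl. lra. rewrite S_INR. simpl pow.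
 assert (IH := IHn x Hx). assert (0 <= INR n) by apply pos_INR. assert (0 <= (1 - x) ^ n) by (apply pow_le; lra). nra. Qed.

Lemma sumc_nonneg : forall s, (forall q, In q s -> 0 <= fst q) -> 0 <= sumc s.
Proof. induction s; intros; simpl. lra. assert (0 <= fst a) by (apply H0; left; auto).
 assert (0 <= sumc s) by (apply IHs; intros; apply H0; right; auto). lra. Qed.

Lemma GB_bound : forall M k, GG (S M) k * BB (S M) <= 2 * (1 + H (S M)) ^ S k / INR (S M).
Proof. intros. rewrite BB_eq. unfold GG. assert (0 <= H (S M)) by apply H_nonneg.
 assert (0 < INR (S M)) by apply INRS_pos. assert (INR (S M) < INR (S (S M))) by (apply lt_INR; lia).
 assert (0 <= (1 + H (S M)) ^ k) by (apply pow_le; lra).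
 simpl pow. unfold Rdiv.
 apply Rle_trans with ((1 + H (S M)) ^ k * (2 * H (S M) * / INR (S M))).
 apply Rmult_le_compat_l; auto. apply Rmult_le_compat_l. lra. apply Rinv_le_contravar; lra.
 assert (0 < / INR (S M)) by (apply Rinv_0_lt_compat; lra). nra. Qed.

Theorem corollary6 (m : nat) (hm : (2 <= m)%nat) :
  exists z : R, infinite_sum (zeta_term m) z /\
    is_lub (lower_sums m) (INR (fact (m - 1)) * z).
Proof.
 destruct m as [|[|k']]; try lia. replace (S (S k') - 1)%nat with (S k') by lia.
 destruct (zeta_conv k') as [z [Hz [Hle Hlim]]]. exists z. split; auto.
 set (k := S k'). set (m := S (S k')). fold m in Hz, Hle, Hlim.
 set (F := INR (fact k)).
 assert (HF : 1 <= F) by (unfold F; apply (le_INR 1); apply lt_O_fact).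
 assert (Hz0 : 0 <= z) by (apply Rle_trans with (Hp m 0); [unfold Hp; simpl; lra| apply Hle]).
 set (V := F * z).
 assert (HV0 : 0 <= V) by (unfold V; nra).
 assert (Hk0 : 0 < INR k) by (unfold k; apply INRS_pos).
 split.
 - intros v [s [Hval [Hbel Hv]]]. subst v. apply Rle_plus_epsilon. intros eps Heps.
   assert (Hcoef : forall q, In q s -> 0 <= fst q) by (intros [c B] Hq; apply (Hval c B Hq)).
   set (C := sumc s). assert (HC : 0 <= C) by (apply sumc_nonneg; auto).
   set (D := 12 * INR k + INR m * C + 1).
   assert (HD : 0 < D) by (unfold D; assert (0 <= INR m * C) by (apply Rmult_le_pos; [apply pos_INR|auto]); lra).
   destruct (err_small (S k) (eps / D) 0 ltac:(unfold Rdiv; apply Rmult_lt_0_compat; [lra|apply Rinv_0_lt_compat; lra])) as [K [_ [HK2 HKe]]].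
   destruct K as [|M]; [lia|].
   assert (Hok : boxes_ok m s) by (intros q Hq i Hi; destruct q as [c B]; apply (Hval c B Hq); auto).
   assert (Hmon := MON m s (Tup m (S (S M)) (S M) C) Hok (Tup_ok m (S (S M)) (S M) C ltac:(lia)) (fun x => Tup_dominates k' (S M) s x ltac:(lia) Hval Hbel)).
   unfold m in Hmon. rewrite Tup_int with (K := S M) in Hmon by reflexivity. fold m in Hmon.
   assert (HU := UPPER_AN M k'). fold k in HU. unfold PP in HU.
   assert (HGB := GB_bound M k).
   assert (HHp : Hp (S k) (S M) <= z) by apply Hle.
   assert (H1H : 1 <= 1 + H (S M)) by (generalize (H_nonneg (S M)); lra).
   assert (Hpw : 1 <= (1 + H (S M)) ^ S k) by (apply pow_R1_Rle; lra).
   assert (HNp : 0 < INR (S M)) by apply INRS_pos.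
   assert (HNN : INR (S M) < INR (S (S M))) by (apply lt_INR; lia).
   set (E := (1 + H (S M)) ^ S k / INR (S M)) in *.
   assert (HE0 : 0 <= E) by (unfold E, Rdiv; apply Rmult_le_pos; [lra|left; apply Rinv_0_lt_compat; lra]).
   assert (HmC : INR m * (C / INR (S (S M))) <= INR m * C * E).
   { unfold E, Rdiv. rewrite Rmult_assoc. apply Rmult_le_compat_l. apply pos_INR.
     apply Rle_trans with (C * / INR (S M)). apply Rmult_le_compat_l; auto. apply Rinv_le_contravar; lra.
     apply Rmult_le_compat_l; auto. rewrite <- (Rmult_1_l (/ INR (S M))) at 1. apply Rmult_le_compat_r. left; apply Rinv_0_lt_compat; lra. auto. }
   assert (H6 : 6 * INR k * GG (S M) k * BB (S M) <= 12 * INR k * E).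
   { unfold E. replace (6 * INR k * GG (S M) k * BB (S M)) with (6 * INR k * (GG (S M) k * BB (S M))) by ring.
     replace (12 * INR k * ((1 + H (S M)) ^ S k / INR (S M))) with (6 * INR k * (2 * (1 + H (S M)) ^ S k / INR (S M))) by (unfold Rdiv; ring).
     apply Rmult_le_compat_l; lra. }
   assert (HDE : D * E < eps).
   { apply Rmult_lt_reg_r with (/ D). apply Rinv_0_lt_compat; lra.
     replace (D * E * / D) with E by (field; lra). exact HKe. }
   assert (F * Hp (S k) (S M) <= V) by (unfold V; apply Rmult_le_compat_l; lra).
   fold F in HU.
   assert (12 * INR k * E + INR m * C * E + E = D * E) by (unfold D; ring).
   change (step_int (S k) s) with (step_int m s). fold k in Hmon. lra.
 - intros b Hb. apply Rnot_lt_le. intro Hlt.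
   set (eps := V - b). assert (Heps : 0 < eps) by (unfold eps; lra).
   destruct (Hlim (eps / (4 * F)) ltac:(unfold Rdiv; apply Rmult_lt_0_compat; [lra|apply Rinv_0_lt_compat; lra])) as [N0 HN0].
   set (Dl := 2 * (F * INR (k * k) + INR k) + 1).
   assert (HDl : 0 < Dl) by (unfold Dl; assert (0 <= INR (k*k)) by apply pos_INR; nra).
   destruct (err_small (S k) (eps / (4 * Dl)) N0 ltac:(unfold Rdiv; apply Rmult_lt_0_compat; [lra|apply Rinv_0_lt_compat; lra])) as [N [HN0N [HN2 HNe]]].
   destruct N as [|M]; [lia|].
   assert (HL := LOWER_AN M k). assert (HGB := GB_bound M k).
   assert (HHp := HN0 (S M) HN0N).
   assert (Hk2 : 0 <= INR (k * k)) by apply pos_INR.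
   set (L := sumN (S M) (fun r => w0 (S M) r * PP (S M) k (S r))) in *.
   assert (HLlow : L >= V - eps / 4 - eps / 4).
   { assert (F * Hp (S k) (S M) >= V - eps / 4).
     { unfold V. assert (F * (eps / (4 * F)) = eps / 4) by (field; lra). 
       change (Hp m (S M)) with (Hp (S k) (S M)) in HHp.
       assert (F * Hp (S k) (S M) >= F * (z - eps / (4 * F))) by (apply Rle_ge, Rmult_le_compat_l; lra).
       replace (F * (z - eps / (4 * F))) with (F * z - F * (eps / (4 * F))) in H1 by ring. lra. }
     assert ((F * INR (k * k) + INR k) * GG (S M) k * BB (S M) <= eps / 4).
     { replace ((F * INR (k * k) + INR k) * GG (S M) k * BB (S M)) with ((F * INR (k * k) + INR k) * (GG (S M) k * BB (S M))) by ring.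
       apply Rle_trans with ((F * INR (k * k) + INR k) * (2 * (1 + H (S M)) ^ S k / INR (S M))).
       apply Rmult_le_compat_l; auto. nra.
       apply Rle_trans with (Dl * ((1 + H (S M)) ^ S k / INR (S M))).
       unfold Dl. assert (0 <= (1 + H (S M)) ^ S k / INR (S M)).
       { unfold Rdiv; apply Rmult_le_pos. apply pow_le. generalize (H_nonneg (S M)); lra. left; apply Rinv_0_lt_compat, INRS_pos. }
       unfold Rdiv in *. nra.
       apply Rmult_le_reg_r with (/ Dl). apply Rinv_0_lt_compat; lra.
       replace (Dl * ((1 + H (S M)) ^ S k / INR (S M)) * / Dl) with ((1 + H (S M)) ^ S k / INR (S M)) by (assert (INR (S M) <> 0) by (apply not_0_INR; lia); field; repeat split; lra).
       replace (eps / 4 * / Dl) with (eps / (4 * Dl)) by (field; lra). lra. }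
     cbv zeta in HL. fold F in HL. fold L in HL. lra. }
   assert (HL0 : 0 <= L) by (apply sumN_nonneg; intros; apply Rmult_le_pos; [left; apply w0_pos; auto| apply PP_nonneg; lia]).
   assert (HLV : L <= V).
   { apply Rle_trans with (sumN (S M) (fun r => w0 (S M) r * PP (S M) k r)).
     apply sumN_le. intros r Hr. apply Rmult_le_compat_l. left; apply w0_pos; auto. unfold PP. apply pow_incr.
     assert (H r <= H (S r) <= H (S M)) by (split; apply H_mono; lia). lra.
     assert (HU := UP (S M) k (w0 (S M)) (fun r Hr => Rlt_le _ _ (w0_pos _ r Hr))). rewrite ident in HU. fold F in HU.
     assert (F * Hp (S k) (S M) <= V) by (unfold V; apply Rmult_le_compat_l; [lra|apply Hle]). lra. }
   set (NN := INR (S M)). assert (HNN : 0 < NN) by apply INRS_pos.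
   assert (Hm0 : 0 < INR m) by apply INRS_pos.
   set (eta := Rmin (/ (2 * NN)) (eps / (4 * INR m * NN * (V + 1)))).
   assert (Heta1 : 0 < eta).
   { unfold eta. apply Rmin_glb_lt. apply Rinv_0_lt_compat; lra. unfold Rdiv. apply Rmult_lt_0_compat. lra. apply Rinv_0_lt_compat.
     apply Rmult_lt_0_compat; [apply Rmult_lt_0_compat|]; lra. }
   assert (Heta2 : eta < / NN).
   { apply Rle_lt_trans with (/ (2 * NN)). apply Rmin_l. apply Rinv_lt_contravar; nra. }
   assert (Heta3 : INR m * NN * eta * (V + 1) <= eps / 4).
   { assert (eta <= eps / (4 * INR m * NN * (V + 1))) by apply Rmin_r.
     apply Rle_trans with (INR m * NN * (eps / (4 * INR m * NN * (V + 1))) * (V + 1)).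
     apply Rmult_le_compat_r. lra. apply Rmult_le_compat_l. nra. auto.
     right. field. repeat split; lra. }
   assert (Hin : lower_sums m (step_int m (Slow m (S M) eta))).
   { exists (Slow m (S M) eta). split; [|split; auto].
     apply Slow_valid. lia. split; auto. apply Slow_below. lia. split; auto. }
   assert (Hbnd := Hb _ Hin).
   unfold m in Hbnd. rewrite Slow_int in Hbnd. fold m in Hbnd. fold L in Hbnd. fold NN in Hbnd.
   assert (Hber := bernoulli (S k) (NN * eta) ltac:(split; [nra| assert (NN * eta < NN * / NN) by (apply Rmult_lt_compat_l; lra); rewrite Rinv_r in H0; lra])).
   change (S k) with m in Hber.
   assert (Hth : (1 - INR m * (NN * eta)) * L <= (1 - NN * eta) ^ m * L) by (apply Rmult_le_compat_r; auto).
   assert (INR m * (NN * eta) * L <= eps / 4).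
   { apply Rle_trans with (INR m * NN * eta * (V + 1)); [|auto].
     replace (INR m * (NN * eta) * L) with ((INR m * NN * eta) * L) by ring. apply Rmult_le_compat_l. apply Rmult_le_pos; [apply Rmult_le_pos|]; lra. lra. }
   fold k in Hbnd. fold L in Hbnd. unfold eps in *. lra.
Qed.
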